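(* Let $n\ge 1$ and let $\omega\subset\mathbb{R}^n$ be a non-empty open set. Then there exists a constant $C=C(\omega)>1$ such that for every $N\in\mathbb{N}$ and every $f\in\mathcal{E}_N$, $$\|f\|_{L^2(\mathbb{R}^n)}\le C\,e^{\frac12 N\ln(N+1)+CN}\,\|f\|_{L^2(\omega)}.$$
   Context: The one-dimensional Hermite functions are $\phi_k(x)=\frac{(-1)^k}{\sqrt{2^k k!\sqrt{\pi}}}e^{x^2/2}\frac{d^k}{dx^k}(e^{-x^2})$, $k\in\mathbb{N}=\{0,1,2,\dots\}$, $x\in\mathbb{R}$. For $\alpha=(\alpha_1,\dots,\alpha_n)\in\mathbb{N}^n$ and $x\in\mathbb{R}^n$, $\Phi_\alpha(x)=\prod_{j=1}^n\phi_{\alpha_j}(x_j)$, and $|\alpha|=\alpha_1+\dots+\alpha_n$. For $N\in\mathbb{N}$, $\mathcal{E}_N=\mathrm{Span}_{\mathbb{C}}\{\Phi_\alpha:\alpha\in\mathbb{N}^n,\ |\alpha|\le N\}$. *)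

(* Defs.v *)
From Stdlib Require Import Reals List ZArith Lia.
Import ListNotations.
Open Scope R_scope.

(* Points of R^n are functions nat -> R; only coordinates j < n matter. *)
Definition Rn := nat -> R.

Inductive nth_deriv : nat -> (R -> R) -> (R -> R) -> Prop :=
| nth_deriv_O (f : R -> R) : nth_deriv 0 f f
| nth_deriv_S (k : nat) (f g h : R -> R) :
    nth_deriv k f g -> (forall x, derivable_pt_lim g x (h x)) ->
    nth_deriv (S k) f h.

Definition hermite_functions (phi : nat -> R -> R) : Prop :=
  forall k : nat, exists g : R -> R,
    nth_deriv k (fun x => exp (- (x ^ 2))) g /\
    forall x, phi k x =
      (-1) ^ k / sqrt (2 ^ k * INR (fact k) * sqrt PI) * exp (x ^ 2 / 2) * g x.

(* All multi-indices alpha in N^n with |alpha| <= N, as lists of length n. *)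
Fixpoint multi_indices (n N : nat) : list (list nat) :=
  match n with
  | O => [nil]
  | S m => flat_map (fun a => map (cons a) (multi_indices m (N - a))) (seq 0 (S N))
  end.

Fixpoint prodn (n : nat) (F : nat -> R) : R :=
  match n with O => 1 | S m => prodn m F * F m end.

Definition Phi (phi : nat -> R -> R) (n : nat) (alpha : list nat) (x : Rn) : R :=
  prodn n (fun j => phi (nth j alpha 0%nat) (x j)).

Definition combo (phi : nat -> R -> R) (n N : nat) (c : list nat -> R) (x : Rn) : R :=
  fold_right (fun alpha acc => c alpha * Phi phi n alpha x + acc) 0
             (multi_indices n N).

(* f = combo c + i combo d  (general element of E_N, complex coefficients
   c_alpha + i d_alpha); |f(x)|^2 : *)
Definition abs2_f (phi : nat -> R -> R) (n N : nat) (c d : list nat -> R) (x : Rn) : R :=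
  (combo phi n N c x) ^ 2 + (combo phi n N d x) ^ 2.

Definition open_n (n : nat) (A : Rn -> Prop) : Prop :=
  forall x, A x -> exists r, 0 < r /\
    forall y, (forall j, (j < n)%nat -> Rabs (y j - x j) < r) -> A y.

(* A depends only on the first n coordinates, i.e. is a subset of R^n. *)
Definition subset_Rn (n : nat) (A : Rn -> Prop) : Prop :=
  forall x y, (forall j, (j < n)%nat -> x j = y j) -> A x -> A y.

Definition dcube (n k : nat) (z : nat -> Z) (x : Rn) : Prop :=
  forall j, (j < n)%nat ->
    IZR (z j) / 2 ^ k <= x j <= (IZR (z j) + 1) / 2 ^ k.

(* Lower Darboux sums of g over finitely many pairwise distinct dyadic cubes
   (of a common level k) contained in A; each cube Q carries a lower bound m_Q
   of g on Q. *)
Definition lower_sum (n : nat) (A : Rn -> Prop) (g : Rn -> R) (s : R) : Prop :=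
  exists (k : nat) (cs : list ((nat -> Z) * R)),
    ForallOrdPairs (fun p q => exists l, (l < n)%nat /\ fst p l <> fst q l) cs /\
    Forall (fun p => (forall x, dcube n k (fst p) x -> A x) /\
                     (forall x, dcube n k (fst p) x -> snd p <= g x)) cs /\
    s = fold_right (fun p acc => snd p / 2 ^ (k * n) + acc) 0 cs.

(* For continuous g >= 0 and open A, the supremum of the lower sums is the
   Lebesgue integral of g over A.  So for I with is_lub (lower_sum n A g) I,
   I = int_A g. *)

(* Main.v *)
Require Import Defs.
From Stdlib Require Import Reals List ZArith Lra Lia FunctionalExtensionality Classical.
Import ListNotations.
Open Scope R_scope.

Inductive IsPoly : nat -> (R -> R) -> Prop :=
| IsP0 (c : R) (f : R -> R) : (forall x, f x = c) -> IsPoly 0 f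
| IsPS (d : nat) (c : R) (g f : R -> R) :
    IsPoly d g -> (forall x, f x = c + x * g x) -> IsPoly (S d) f.

Ltac inv0 H := inversion H as [c0 f0 E0|]; subst.
Ltac invS H := inversion H as [|d0 c0 g0 f0 Hg0 E0]; subst.

Lemma IsPoly_ext d f g : IsPoly d f -> (forall x, f x = g x) -> IsPoly d g.
Proof.
  intros H E; destruct H as [c f Hf | d c h f Hh Hf].
  - apply (IsP0 c); intro x; rewrite <- E; auto.
  - apply (IsPS d c h); auto; intro x; rewrite <- E; auto.
Qed.

Lemma IsPoly_const d c : IsPoly d (fun _ => c).
Proof.
  induction d.
  - apply (IsP0 c); auto.
  - apply (IsPS d c (fun _ => 0)).
    + clear IHd; induction d; [apply (IsP0 0); auto|].
      apply (IsPS d 0 (fun _ => 0)); auto; intro; ring.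
    + intro; ring.
Qed.

Lemma IsPoly_S d f : IsPoly d f -> IsPoly (S d) f.
Proof.
  revert f; induction d; intros f H.
  - inv0 H. apply (IsPS 0 c0 (fun _ => 0)); [apply IsPoly_const|].
    intro x; rewrite E0; ring.
  - invS H. apply (IsPS (S d) c0 g0); auto.
Qed.

Lemma IsPoly_le d e f : (d <= e)%nat -> IsPoly d f -> IsPoly e f.
Proof. induction 1; auto using IsPoly_S. Qed.

Lemma IsPoly_add d f g : IsPoly d f -> IsPoly d g -> IsPoly d (fun x => f x + g x).
Proof.
  revert f g; induction d; intros f g Hf Hg.
  - inversion Hf as [c1 f1 E1|]; inversion Hg as [c2 g2 E2|]; subst. apply (IsP0 (c1 + c2)); intro; rewrite E1, E2; auto.
  - inversion Hf as [|d1 c1 g1 f1 H1 E1]; inversion Hg as [|d2 c2 g2 f2 H2 E2]; subst.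
    apply (IsPS d (c1 + c2) (fun x => g1 x + g2 x)); auto.
    intro x; rewrite E1, E2; ring.
Qed.

Lemma IsPoly_scal d a f : IsPoly d f -> IsPoly d (fun x => a * f x).
Proof.
  revert f; induction d; intros f Hf.
  - inv0 Hf. apply (IsP0 (a * c0)); intro; rewrite E0; auto.
  - invS Hf. apply (IsPS d (a * c0) (fun x => a * g0 x)); auto.
    intro x; rewrite E0; ring.
Qed.

Lemma IsPoly_X d f : IsPoly d f -> IsPoly (S d) (fun x => x * f x).
Proof. intro H; apply (IsPS d 0 f); auto; intro; ring. Qed.

Lemma IsPoly_mul d e f g : IsPoly d f -> IsPoly e g -> IsPoly (d + e) (fun x => f x * g x).
Proof.
  revert f; induction d; intros f Hf Hg.
  - inv0 Hf. simpl. eapply IsPoly_ext; [apply (IsPoly_scal _ c0); eauto|].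
    intro; rewrite E0; ring.
  - invS Hf.
    eapply IsPoly_ext.
    + apply IsPoly_add; [apply (IsPoly_le e); [lia| apply (IsPoly_scal _ c0); eauto]|].
      simpl. apply IsPoly_X. apply IHd; eauto.
    + intro x; simpl; rewrite E0; ring.
Qed.

Lemma IsPoly_affine d f a b : IsPoly d f -> IsPoly d (fun t => f (a + b * t)).
Proof.
  revert f; induction d; intros f Hf.
  - inv0 Hf. apply (IsP0 c0); auto.
  - invS Hf.
    specialize (IHd g0 Hg0).
    eapply IsPoly_ext.
    + apply IsPoly_add; [apply IsPoly_S; apply IsPoly_add; [apply (IsPoly_const _ c0)| apply (IsPoly_scal _ a); exact IHd]|].
      apply IsPoly_X. apply (IsPoly_scal _ b). exact IHd.
    + intro t; cbv beta. rewrite E0. ring.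
Qed.

Lemma IsPoly_factor d f s : IsPoly (S d) f ->
  exists r, IsPoly d r /\ forall t, f t - f s = (t - s) * r t.
Proof.
  revert f; induction d; intros f Hf.
  - invS Hf. inversion Hg0 as [c1 f1 E1|]; subst.
    exists (fun _ => c1); split; [apply IsPoly_const|]. intro t; rewrite !E0, !E1; ring.
  - invS Hf.
    destruct (IHd g0 Hg0) as [r [Hr Er]].
    exists (fun t => g0 t + s * r t); split.
    + apply IsPoly_add; auto. apply IsPoly_S; apply IsPoly_scal; auto.
    + intro t; rewrite !E0. specialize (Er t). nra.
Qed.

Lemma IsPoly_roots d f (rs : list R) : IsPoly d f -> NoDup rs -> (S d <= length rs)%nat ->
  (forall r, In r rs -> f r = 0) -> forall t, f t = 0.
Proof.
  revert f rs; induction d; intros f rs Hf Hnd Hl Hr t.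
  - inv0 Hf. destruct rs as [|r rs]; simpl in Hl; [lia|].
    rewrite E0. rewrite <- (E0 r). apply Hr; left; auto.
  - destruct rs as [|r rs]; simpl in Hl; [lia|].
    destruct (IsPoly_factor d f r Hf) as [q [Hq Eq]].
    inversion Hnd as [|a l Hnin Hnd']; subst.
    assert (forall t, q t = 0).
    { apply (IHd q rs Hq Hnd'); [lia|].
      intros r' Hin. assert (r' <> r) by (intro; subst; auto).
      specialize (Eq r'). rewrite (Hr r' (or_intror Hin)), (Hr r (or_introl eq_refl)) in Eq.
      assert ((r' - r) <> 0) by lra.
      apply (Rmult_eq_reg_l (r' - r)); auto. lra. }
    specialize (Eq t). rewrite H, (Hr r (or_introl eq_refl)) in Eq. lra.
Qed.

Lemma IsPoly_deriv d f : IsPoly d f ->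
  exists f', IsPoly d f' /\ forall x, derivable_pt_lim f x (f' x).
Proof.
  revert f; induction d; intros f Hf.
  - inv0 Hf. exists (fun _ => 0); split; [apply IsPoly_const|].
    intro x. assert (f = fun _ => c0) as -> by (apply functional_extensionality; auto).
    apply derivable_pt_lim_const.
  - invS Hf. destruct (IHd g0 Hg0) as [g' [Hg' Dg']].
    exists (fun x => g0 x + x * g' x); split.
    + apply IsPoly_add; [apply IsPoly_S; auto| apply IsPoly_X; auto].
    + intro x. assert (f = fun x => c0 + x * g0 x) as -> by (apply functional_extensionality; auto).
      replace (g0 x + x * g' x) with (0 + (1 * g0 x + x * g' x)) by ring.
      apply (derivable_pt_lim_plus (fun _ => c0) (fun x => x * g0 x)).
      * apply derivable_pt_lim_const.
      * apply (derivable_pt_lim_mult id g0); [apply derivable_pt_lim_id| auto].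
Qed.

Lemma IsPoly_bounded d f a b : IsPoly d f -> exists B, forall t, a <= t <= b -> Rabs (f t) <= B.
Proof.
  revert f; induction d; intros f Hf.
  - inv0 Hf. exists (Rabs c0); intros; rewrite E0; lra.
  - invS Hf. destruct (IHd g0 Hg0) as [B HB].
    exists (Rabs c0 + (Rabs a + Rabs b) * Rabs B). intros t Ht. rewrite E0.
    eapply Rle_trans; [apply Rabs_triang|]. rewrite Rabs_mult.
    apply Rplus_le_compat_l. apply Rmult_le_compat; try apply Rabs_pos.
    + unfold Rabs; repeat destruct Rcase_abs; lra.
    + specialize (HB t Ht). unfold Rabs at 2; destruct Rcase_abs; lra.
Qed.

Lemma prodn_ext m F G : (forall j, (j < m)%nat -> F j = G j) -> prodn m F = prodn m G.
Proof. induction m; simpl; intros; auto. rewrite IHm, H; auto; lia. Qed.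

Lemma prodn_zero m F j : (j < m)%nat -> F j = 0 -> prodn m F = 0.
Proof.
  induction m; simpl; intros; [lia|].
  destruct (Nat.eq_dec j m); [subst; rewrite H0; ring|]. rewrite IHm; [ring|lia|auto].
Qed.

Lemma prodn_one m F : (forall j, (j < m)%nat -> F j = 1) -> prodn m F = 1.
Proof. induction m; simpl; intros; auto. rewrite IHm, H; auto; try lia; ring. Qed.

Lemma prodn_mul m F G : prodn m (fun j => F j * G j) = prodn m F * prodn m G.
Proof. induction m; simpl; [ring|]. rewrite IHm; ring. Qed.

Lemma prodn_const m c : prodn m (fun _ => c) = c ^ m.
Proof. induction m; simpl; auto. rewrite IHm; ring. Qed.

Lemma prodn_nonneg m F : (forall j, (j < m)%nat -> 0 <= F j) -> 0 <= prodn m F.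
Proof. induction m; simpl; intros; [lra|]. apply Rmult_le_pos; auto. Qed.

Lemma prodn_pos m F : (forall j, (j < m)%nat -> 0 < F j) -> 0 < prodn m F.
Proof. induction m; simpl; intros; [lra|]. apply Rmult_lt_0_compat; auto. Qed.

Lemma prodn_le m F G : (forall j, (j < m)%nat -> 0 <= F j <= G j) -> prodn m F <= prodn m G.
Proof.
  induction m; simpl; intros; [lra|].
  apply Rmult_le_compat.
  - apply prodn_nonneg; intros; apply H; lia.
  - apply H; lia.
  - apply IHm; intros; apply H; lia.
  - apply H; lia.
Qed.

Lemma prodn_abs m F : Rabs (prodn m F) = prodn m (fun j => Rabs (F j)).
Proof. induction m; simpl; [apply Rabs_R1|]. rewrite Rabs_mult, IHm; auto. Qed.

Lemma prodn_inv m F : prodn m (fun j => / F j) = / prodn m F.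
Proof. induction m; simpl; [lra|]. rewrite IHm, Rinv_mult; auto. Qed.

Fixpoint sumN (m : nat) (F : nat -> nat) : nat :=
  match m with O => O | S k => (sumN k F + F k)%nat end.

Lemma IsPoly_prodn m (F : nat -> R -> R) deg :
  (forall j, (j < m)%nat -> IsPoly (deg j) (F j)) ->
  IsPoly (sumN m deg) (fun t => prodn m (fun j => F j t)).
Proof.
  induction m; simpl; intros H.
  - apply IsPoly_const.
  - apply (IsPoly_mul _ _ (fun t => prodn m (fun j => F j t)) (F m)).
    + apply IHm; intros; apply H; lia.
    + apply H; lia.
Qed.

Lemma sumN_skip m i : (i < m)%nat -> sumN m (fun j => if Nat.eqb j i then 0%nat else 1%nat) = (m - 1)%nat.
Proof.
  assert (A : forall k, (k <= i)%nat -> sumN k (fun j => if Nat.eqb j i then 0%nat else 1%nat) = k).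
  { induction k; simpl; intros; auto. rewrite IHk by lia.
    destruct (Nat.eqb_spec k i); lia. }
  induction m; intros; [lia|]. simpl.
  destruct (Nat.eqb_spec m i).
  - subst. rewrite A; lia.
  - rewrite IHm by lia. lia.
Qed.

Lemma prodn_skip_const m i c : (i < m)%nat ->
  prodn m (fun j => if Nat.eqb j i then 1 else c) = c ^ (m - 1).
Proof.
  assert (A : forall k, (k <= i)%nat -> prodn k (fun j => if Nat.eqb j i then 1 else c) = c ^ k).
  { induction k; simpl; intros; auto. rewrite IHk by lia.
    destruct (Nat.eqb_spec k i); [lia|ring]. }
  induction m; intros; [lia|]. simpl.
  destruct (Nat.eqb_spec m i).
  - subst. rewrite A by lia. rewrite Nat.sub_0_r. ring.
  - rewrite IHm by lia. simpl. rewrite Nat.sub_0_r. destruct m; [lia|]. simpl. rewrite Nat.sub_0_r. ring.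
Qed.

Lemma INR_fact_S k : INR (fact (S k)) = INR (S k) * INR (fact k).
Proof. rewrite fact_simpl, mult_INR; auto. Qed.

Lemma prodn_skip_dist d i : (i <= d)%nat ->
  prodn (S d) (fun j => if Nat.eqb j i then 1 else Rabs (INR i - INR j))
  = INR (fact i) * INR (fact (d - i)).
Proof.
  intros Hid.
  set (P := fun m => prodn m (fun j => if Nat.eqb j i then 1 else Rabs (INR i - INR j))).
  assert (A : forall m, (m <= i)%nat -> P m * INR (fact (i - m)) = INR (fact i)).
  { induction m; intros Hm; unfold P in *; simpl.
    - rewrite Nat.sub_0_r; ring.
    - destruct (Nat.eqb_spec m i); [lia|].
      rewrite <- IHm by lia.
      replace (i - m)%nat with (S (i - S m)) by lia.
      rewrite INR_fact_S. replace (INR (S (i - S m))) with (INR i - INR m).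
      + rewrite Rabs_right; [ring|]. assert (INR m < INR i) by (apply lt_INR; lia). lra.
      + rewrite S_INR, minus_INR by lia. rewrite S_INR. ring. }
  assert (B : forall k, P (S i + k)%nat = INR (fact i) * INR (fact k)).
  { induction k.
    - unfold P; simpl. rewrite Nat.add_0_r. rewrite Nat.eqb_refl.
      fold (P i). rewrite <- (A i) by lia. rewrite Nat.sub_diag. simpl. ring.
    - replace (S i + S k)%nat with (S (S i + k))%nat by lia.
      change (P (S (S i + k))) with (P (S i + k)%nat * (if Nat.eqb (S i + k) i then 1 else Rabs (INR i - INR (S i + k)))).
      rewrite IHk.
      destruct (Nat.eqb_spec (S i + k) i); [lia|].
      rewrite INR_fact_S. rewrite Rabs_left1.
      + rewrite plus_INR, S_INR, S_INR. ring.
      + rewrite plus_INR, S_INR. pose proof (pos_INR k). lra. }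
  fold (P (S d)). replace (S d) with (S i + (d - i))%nat by lia. apply B.
Qed.

Definition node (d i : nat) : R := -1 + 2 * INR i / INR d.

Definition lag (d i : nat) (t : R) : R :=
  prodn (S d) (fun j => if Nat.eqb j i then 1 else (t - node d j) / (node d i - node d j)).

Lemma node_inj d i j : (0 < d)%nat -> node d i = node d j -> i = j.
Proof.
  intros Hd E. unfold node in E. assert (0 < INR d) by (apply lt_0_INR; lia).
  apply INR_eq. apply (Rmult_eq_reg_r (2 / INR d)); [|apply Rgt_not_eq; apply Rdiv_lt_0_compat; lra].
  unfold Rdiv in *. lra.
Qed.

Lemma node_diff d i j : (0 < d)%nat -> node d i - node d j = 2 * (INR i - INR j) / INR d.
Proof. intros; unfold node; field. apply not_0_INR; lia. Qed.

Lemma node_bound d j : (0 < d)%nat -> (j <= d)%nat -> Rabs (node d j) <= 1.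
Proof.
  intros. unfold node. assert (0 < INR d) by (apply lt_0_INR; lia).
  assert (0 <= INR j <= INR d) by (split; [apply pos_INR| apply le_INR; auto]).
  assert (E : INR j = (INR j / INR d) * INR d) by (field; lra).
  assert (0 <= INR j / INR d <= 1) by (split; nra).
  apply Rabs_le. unfold Rdiv in *. lra.
Qed.

Lemma lag_IsPoly d i : (i <= d)%nat -> IsPoly d (lag d i).
Proof.
  intros Hi. unfold lag.
  replace d with (sumN (S d) (fun j => if Nat.eqb j i then 0%nat else 1%nat)) at 1
    by (rewrite sumN_skip; lia).
  apply (IsPoly_prodn (S d) (fun j t => if Nat.eqb j i then 1 else (t - node d j) / (node d i - node d j))).
  intros j Hj. destruct (Nat.eqb j i).
  - apply IsPoly_const.
  - apply (IsPS 0 (- node d j / (node d i - node d j)) (fun _ => / (node d i - node d j))).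
    + apply IsPoly_const.
    + intro x. unfold Rdiv. ring.
Qed.

Lemma lag_node d i k : (0 < d)%nat -> (i <= d)%nat -> (k <= d)%nat ->
  lag d i (node d k) = if Nat.eqb k i then 1 else 0.
Proof.
  intros Hd Hi Hk. unfold lag. destruct (Nat.eqb_spec k i).
  - subst. apply prodn_one. intros j Hj. destruct (Nat.eqb_spec j i); auto.
    field. intro E. apply n. symmetry. apply (node_inj d); auto. lra.
  - apply (prodn_zero _ _ k); [lia|].
    destruct (Nat.eqb_spec k i); [lia|]. unfold Rdiv; ring.
Qed.

Lemma IsPoly_sum d m (F : nat -> R -> R) : (forall i, (i <= m)%nat -> IsPoly d (F i)) ->
  IsPoly d (fun t => sum_f_R0 (fun i => F i t) m).
Proof.
  induction m; intros H; simpl.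
  - apply H; lia.
  - apply (IsPoly_add d (fun t => sum_f_R0 (fun i => F i t) m) (F (S m))); auto.
Qed.

Lemma sum_delta d k (F : nat -> R) : (k <= d)%nat ->
  sum_f_R0 (fun i => F i * (if Nat.eqb k i then 1 else 0)) d = F k.
Proof.
  induction d; intros Hk; simpl.
  - assert (k = 0%nat) by lia; subst; simpl; ring.
  - destruct (Nat.eq_dec k (S d)).
    + subst. rewrite Nat.eqb_refl.
      rewrite (sum_eq _ (fun _ => 0)).
      * assert (Z : forall m, sum_f_R0 (fun _ => 0) m = 0).
        { induction m; simpl; [ring|]. rewrite IHm; ring. }
        rewrite Z; ring.
      * intros i Hi. destruct (Nat.eqb_spec (S d) i); [lia|ring].
    + rewrite IHd by lia. destruct (Nat.eqb_spec k (S d)); [lia|ring].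
Qed.

Lemma NoDup_map_inj {A B} (f : A -> B) (l : list A) :
  NoDup l -> (forall x y, In x l -> In y l -> f x = f y -> x = y) -> NoDup (map f l).
Proof.
  induction l; simpl; intros Hnd Hinj; constructor.
  - inversion Hnd; subst. intro Hin. apply in_map_iff in Hin as [y [E Hy]].
    assert (y = a) by (apply Hinj; auto). subst; auto.
  - inversion Hnd; subst. apply IHl; auto.
Qed.

Lemma lagrange d p : (0 < d)%nat -> IsPoly d p ->
  forall t, p t = sum_f_R0 (fun i => p (node d i) * lag d i t) d.
Proof.
  intros Hd Hp.
  set (q := fun t => p t + (-1) * sum_f_R0 (fun i => p (node d i) * lag d i t) d).
  assert (Hq : IsPoly d q).
  { apply IsPoly_add; auto. apply IsPoly_scal.
    apply (IsPoly_sum d d (fun i t => p (node d i) * lag d i t)).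
    intros i Hi. apply IsPoly_scal. apply lag_IsPoly; auto. }
  assert (Z : forall t, q t = 0).
  { apply (IsPoly_roots d q (map (node d) (seq 0 (S d)))); auto.
    - apply NoDup_map_inj; [apply seq_NoDup|]. intros; apply (node_inj d); auto.
    - rewrite length_map, length_seq; lia.
    - intros r Hr. apply in_map_iff in Hr as [k [E Hk]]. subst r.
      apply in_seq in Hk. unfold q.
      rewrite (sum_eq _ (fun i => p (node d i) * (if Nat.eqb k i then 1 else 0))).
      + rewrite sum_delta by lia. ring.
      + intros i Hi. rewrite lag_node by lia.
        destruct (Nat.eqb_spec k i), (Nat.eqb_spec i k); auto; lia. }
  intro t. specialize (Z t). unfold q in Z. lra.
Qed.

Lemma lag_bound d i t : (0 < d)%nat -> (i <= d)%nat ->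
  Rabs (lag d i t) <= ((1 + Rabs t) * INR d / 2) ^ d * / (INR (fact i) * INR (fact (d - i))).
Proof.
  intros Hd Hi. unfold lag. rewrite prodn_abs.
  assert (Hd' : 0 < INR d) by (apply lt_0_INR; lia).
  eapply Rle_trans.
  - apply (prodn_le _ _ (fun j => (if Nat.eqb j i then 1 else (1 + Rabs t) * INR d / 2) *
                                  / (if Nat.eqb j i then 1 else Rabs (INR i - INR j)))).
    intros j Hj. split; [apply Rabs_pos|].
    destruct (Nat.eqb_spec j i).
    + rewrite Rabs_R1; lra.
    + assert (Hij : INR i - INR j <> 0) by (intro E; apply n; apply INR_eq; lra).
      unfold Rdiv. rewrite Rabs_mult, Rabs_inv, node_diff by lia.
      assert (Hn : Rabs (t - node d j) <= 1 + Rabs t).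
      { pose proof (node_bound d j Hd ltac:(lia)).
        eapply Rle_trans; [apply Rabs_triang|]. rewrite Rabs_Ropp. lra. }
      replace (Rabs (2 * (INR i - INR j) / INR d)) with (2 * Rabs (INR i - INR j) / INR d).
      * assert (0 < Rabs (INR i - INR j)) by (apply Rabs_pos_lt; auto).
        replace (/ (2 * Rabs (INR i - INR j) / INR d)) with (INR d / 2 * / Rabs (INR i - INR j))
          by (field; lra).
        replace ((1 + Rabs t) * INR d * / 2 * / Rabs (INR i - INR j)) with
          ((1 + Rabs t) * (INR d / 2 * / Rabs (INR i - INR j))) by (unfold Rdiv; ring).
        apply Rmult_le_compat_r; auto.
        apply Rmult_le_pos; [lra| left; apply Rinv_0_lt_compat; auto].
      * unfold Rdiv. rewrite !Rabs_mult, Rabs_inv, (Rabs_right 2), (Rabs_right (INR d)); lra.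
  - rewrite prodn_mul, prodn_inv, prodn_skip_const by lia.
    replace (S d - 1)%nat with d by lia.
    rewrite prodn_skip_dist by lia. right; reflexivity.
Qed.

Lemma exp_pow_nat (x : R) (n : nat) : exp x ^ n = exp (INR n * x).
Proof.
  induction n; [simpl; rewrite Rmult_0_l, exp_0; auto|].
  rewrite S_INR, Rmult_plus_distr_r, Rmult_1_l, exp_plus, <- IHn. simpl; ring.
Qed.

Lemma Sd_pow_le d : INR (S d) ^ d <= 3 * INR d ^ d.
Proof.
  destruct d; [simpl; lra|].
  set (m := S d). assert (Hm : 0 < INR m) by (apply lt_0_INR; unfold m; lia).
  replace (INR (S m)) with (INR m * (1 + / INR m)) by (rewrite S_INR; field; lra).
  rewrite Rpow_mult_distr.
  assert ((1 + / INR m) ^ m <= 3).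
  { eapply Rle_trans; [apply pow_incr; split; [|left; apply exp_ineq1]|].
    - assert (0 < / INR m) by (apply Rinv_0_lt_compat; lra). lra.
    - apply Rgt_not_eq, Rinv_0_lt_compat; lra.
    - rewrite exp_pow_nat. replace (INR m * / INR m) with 1 by (field; lra). apply exp_le_3. }
  assert (0 <= INR m ^ m) by (apply pow_le; lra). nra.
Qed.

Lemma fact_bound d : INR d ^ d <= 3 ^ d * INR (fact d).
Proof.
  induction d; [simpl; lra|].
  rewrite INR_fact_S. change (INR (S d) ^ S d) with (INR (S d) * INR (S d) ^ d).
  pose proof (Sd_pow_le d).
  assert (0 <= INR (S d)) by apply pos_INR.
  replace (3 ^ S d * (INR (S d) * INR (fact d))) with (INR (S d) * (3 * (3 ^ d * INR (fact d)))) by (change (3 ^ S d) with (3 * 3 ^ d); ring).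
  apply Rmult_le_compat_l; auto.
  assert (0 <= 3 ^ d * INR (fact d)). { apply Rmult_le_pos; [apply pow_le; lra|apply pos_INR]. }
  lra.
Qed.

Lemma sum_inv_fact d : sum_f_R0 (fun i => / (INR (fact i) * INR (fact (d - i)))) d = 2 ^ d / INR (fact d).
Proof.
  pose proof (binomial 1 1 d) as B. replace (1 + 1) with 2 in B by ring.
  rewrite B. unfold Rdiv. rewrite Rmult_comm, scal_sum.
  apply sum_eq. intros i Hi. unfold C. rewrite !pow1.
  pose proof (INR_fact_lt_0 d). pose proof (INR_fact_lt_0 i). pose proof (INR_fact_lt_0 (d - i)).
  field; repeat split; lra.
Qed.

Lemma sum_scal_l a F n : sum_f_R0 (fun i => a * F i) n = a * sum_f_R0 F n.
Proof. induction n; simpl; [ring|]. rewrite IHn; ring. Qed.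

Lemma lemmaA d p M : IsPoly d p -> (forall t, -1 <= t <= 1 -> Rabs (p t) <= M) ->
  forall t, Rabs (p t) <= M * (3 * (1 + Rabs t)) ^ d.
Proof.
  intros Hp HM t.
  destruct d.
  - inversion Hp as [c0 f0 E0|]; subst. rewrite E0, <- (E0 0). simpl. rewrite Rmult_1_r. apply HM; lra.
  - assert (Hd : (0 < S d)%nat) by lia. set (D := S d) in *.
    rewrite (lagrange D p Hd Hp t).
    eapply Rle_trans; [apply sum_f_R0_triangle|].
    eapply Rle_trans.
    + apply (sum_Rle _ (fun i => M * (((1 + Rabs t) * INR D / 2) ^ D * / (INR (fact i) * INR (fact (D - i)))))).
      intros i Hi. rewrite Rabs_mult. apply Rmult_le_compat; try apply Rabs_pos.
      * apply HM. pose proof (node_bound D i Hd Hi). revert H; unfold Rabs; destruct Rcase_abs; intros; lra.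
      * apply lag_bound; auto.
    + rewrite sum_scal_l.
      assert (HM0 : 0 <= M) by (specialize (HM 0 ltac:(lra)); pose proof (Rabs_pos (p 0)); lra).
      apply Rmult_le_compat_l; auto.
      rewrite sum_scal_l, sum_inv_fact.
      pose proof (fact_bound D). pose proof (INR_fact_lt_0 D).
      unfold Rdiv. rewrite !Rpow_mult_distr.
      assert (0 <= (1 + Rabs t) ^ D) by (apply pow_le; pose proof (Rabs_pos t); lra).
      match goal with |- ?L <= _ => replace L
        with ((1 + Rabs t) ^ D * (INR D ^ D * / INR (fact D))) end.
      2:{ rewrite pow_inv. field. split; [lra| apply pow_nonzero; lra]. }
      rewrite (Rmult_comm (3 ^ D)). apply Rmult_le_compat_l; auto.
      apply (Rmult_le_reg_r (INR (fact D))); auto.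
      rewrite Rmult_assoc, Rinv_l by lra. lra.
Qed.

Lemma lemmaA' d p M c h : 0 < h -> IsPoly d p -> (forall t, c - h <= t <= c + h -> Rabs (p t) <= M) ->
  forall t, Rabs (p t) <= M * (3 * (1 + Rabs (t - c) / h)) ^ d.
Proof.
  intros Hh Hp HM t.
  set (q := fun u => p (c + h * u)).
  assert (Hq : IsPoly d q) by (apply IsPoly_affine; auto).
  assert (E : p t = q ((t - c) / h)) by (unfold q; f_equal; field; lra).
  rewrite E. eapply Rle_trans; [apply (lemmaA d q M Hq)|].
  - intros u Hu. unfold q. apply HM. split; nra.
  - unfold Rdiv. rewrite Rabs_mult, Rabs_inv, (Rabs_right h) by lra. lra.
Qed.

Lemma lip_norm d q M : IsPoly d q -> (forall t, -1 <= t <= 1 -> Rabs (q t) <= M) ->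
  forall s t, -1 <= s <= 1 -> -1 <= t <= 1 -> Rabs (q t - q s) <= 4 * M * 24 ^ d * Rabs (t - s).
Proof.
  intros Hq HM s t Hs Ht.
  assert (HM0 : 0 <= M) by (specialize (HM 0 ltac:(lra)); pose proof (Rabs_pos (q 0)); lra).
  destruct d.
  - inversion Hq as [c0 f0 E0|]; subst. rewrite !E0. replace (c0 - c0) with 0 by ring.
    rewrite Rabs_R0. apply Rmult_le_pos; [|apply Rabs_pos]. simpl. lra.
  - destruct (IsPoly_factor d q s Hq) as [r [Hr Er]].
    rewrite Er, Rabs_mult, (Rmult_comm (4 * M * 24 ^ S d)). apply Rmult_le_compat_l; [apply Rabs_pos|].
    assert (Hrb : forall c, (c = 3/4 \/ c = -3/4) -> (forall u, c - 1/4 <= u <= c + 1/4 -> Rabs (s - u) >= 1/2) ->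
              Rabs (r t) <= 4 * M * 24 ^ S d).
    { intros c Hc Hfar.
      assert (HJ : forall u, c - 1/4 <= u <= c + 1/4 -> Rabs (r u) <= 4 * M).
      { intros u Hu. specialize (Er u). specialize (Hfar u Hu).
        assert (Hus : u - s <> 0) by (intro E; rewrite Rabs_minus_sym, E, Rabs_R0 in Hfar; lra).
        assert (E2 : r u = (q u - q s) / (u - s)) by (rewrite Er; field; auto).
        rewrite E2. unfold Rdiv. rewrite Rabs_mult, Rabs_inv by auto.
        rewrite Rabs_minus_sym in Hfar.
        assert (Rabs (q u - q s) <= 2 * M).
        { eapply Rle_trans; [apply Rabs_triang|]. rewrite Rabs_Ropp.
          pose proof (HM u ltac:(destruct Hc; subst; lra)). pose proof (HM s Hs). lra. }
        assert (0 < Rabs (u - s)) by lra.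
        apply (Rmult_le_reg_r (Rabs (u - s))); auto.
        rewrite Rmult_assoc, Rinv_l by lra. nra. }
      pose proof (lemmaA' d r (4 * M) c (1/4) ltac:(lra) Hr HJ t) as HA.
      eapply Rle_trans; [exact HA|].
      assert (Rabs (t - c) <= 7/4) by (apply Rabs_le; destruct Hc; subst; lra).
      assert (3 * (1 + Rabs (t - c) / (1 / 4)) <= 24).
      { unfold Rdiv. replace (/ (1 * / 4)) with 4 by field. lra. }
      assert (0 <= 3 * (1 + Rabs (t - c) / (1 / 4))).
      { unfold Rdiv. pose proof (Rabs_pos (t - c)). replace (/ (1 * / 4)) with 4 by field. lra. }
      apply Rmult_le_compat_l; [lra|].
      change (24 ^ S d) with (24 * 24 ^ d).
      eapply Rle_trans; [apply pow_incr; split; eauto|].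
      assert (1 <= 24 ^ d) by (apply pow_R1_Rle; lra). lra. }
    destruct (Rle_dec s 0).
    + apply (Hrb (3/4)); [auto|]. intros u Hu. rewrite Rabs_left1; lra.
    + apply (Hrb (-3/4)); [auto|]. intros u Hu. rewrite Rabs_right; lra.
Qed.

Lemma lemmaLip d p M c h : 0 < h -> IsPoly d p -> (forall t, c - h <= t <= c + h -> Rabs (p t) <= M) ->
  forall s t, c - h <= s <= c + h -> c - h <= t <= c + h ->
  Rabs (p t - p s) <= 4 * M * 24 ^ d / h * Rabs (t - s).
Proof.
  intros Hh Hp HM s t Hs Ht.
  set (q := fun u => p (c + h * u)).
  assert (Hq : IsPoly d q) by (apply IsPoly_affine; auto).
  assert (E : forall v, p v = q ((v - c) / h)) by (intro; unfold q; f_equal; field; lra).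
  rewrite (E t), (E s).
  eapply Rle_trans; [apply (lip_norm d q M Hq)|].
  - intros u Hu. unfold q. apply HM. split; nra.
  - split; [apply (Rmult_le_reg_r h); auto; unfold Rdiv; rewrite Rmult_assoc, Rinv_l by lra; lra|].
    apply (Rmult_le_reg_r h); auto; unfold Rdiv; rewrite Rmult_assoc, Rinv_l by lra; lra.
  - split; [apply (Rmult_le_reg_r h); auto; unfold Rdiv; rewrite Rmult_assoc, Rinv_l by lra; lra|].
    apply (Rmult_le_reg_r h); auto; unfold Rdiv; rewrite Rmult_assoc, Rinv_l by lra; lra.
  - replace ((t - c) / h - (s - c) / h) with ((t - s) / h) by (field; lra).
    unfold Rdiv. rewrite Rabs_mult, Rabs_inv, (Rabs_right h) by lra. right; ring.
Qed.

Lemma gauss_deriv x : derivable_pt_lim (fun y => exp (- (y ^ 2))) x (exp (- (x ^ 2)) * (- (2 * x))).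
Proof.
  assert (E : (fun y => exp (- (y ^ 2))) = comp exp (fun y => - (y * y))).
  { apply functional_extensionality; intro y; unfold comp; f_equal; ring. }
  rewrite E.
  apply (derivable_pt_lim_comp (fun y => - (y * y)) exp x).
  - replace (- (2 * x)) with (- (1 * x + x * 1)) by ring.
    apply (derivable_pt_lim_opp (fun y => y * y)).
    apply (derivable_pt_lim_mult id id); apply derivable_pt_lim_id.
  - replace (- (x * x)) with (- (x ^ 2)) by ring. apply derivable_pt_lim_exp.
Qed.

Lemma nth_deriv_gauss k f g : nth_deriv k f g -> f = (fun x => exp (- (x ^ 2))) ->
  exists H, IsPoly k H /\ forall x, g x = H x * exp (- (x ^ 2)).
Proof.
  induction 1 as [f | k f g h Hk IH Hd]; intros Ef.
  - exists (fun _ => 1); split; [apply IsPoly_const|]. intro; subst; ring.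
  - destruct (IH Ef) as [H [HH EH]].
    destruct (IsPoly_deriv k H HH) as [H' [HH' DH']].
    exists (fun x => H' x + (-2) * (x * H x)); split.
    + apply IsPoly_add; [apply IsPoly_S; auto|]. apply IsPoly_scal, IsPoly_X; auto.
    + intro x.
      assert (Eg : g = fun y => H y * exp (- (y ^ 2))) by (apply functional_extensionality; auto).
      assert (D : derivable_pt_lim g x (H' x * exp (- (x ^ 2)) + H x * (exp (- (x ^ 2)) * (- (2 * x))))).
      { rewrite Eg. apply (derivable_pt_lim_mult H (fun y => exp (- (y ^ 2)))); auto. apply gauss_deriv. }
      rewrite (uniqueness_limite g x (h x) _ (Hd x) D). ring.
Qed.

Definition pk (phi : nat -> R -> R) (k : nat) (x : R) : R := phi k x * exp (x ^ 2 / 2).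

Lemma pk_poly phi k : hermite_functions phi -> IsPoly k (pk phi k).
Proof.
  intros Hh. destruct (Hh k) as [g [Hg Ephi]].
  destruct (nth_deriv_gauss k _ g Hg eq_refl) as [H [HH EH]].
  apply (IsPoly_ext k (fun x => ((-1) ^ k / sqrt (2 ^ k * INR (fact k) * sqrt PI)) * H x)).
  - apply IsPoly_scal; auto.
  - intro x. unfold pk. rewrite Ephi, EH.
    assert (exp (x ^ 2 / 2) * exp (- (x ^ 2)) * exp (x ^ 2 / 2) = 1).
    { rewrite <- !exp_plus. replace (x ^ 2 / 2 + - (x ^ 2) + x ^ 2 / 2) with 0 by field. apply exp_0. }
    transitivity ((-1) ^ k / sqrt (2 ^ k * INR (fact k) * sqrt PI) * H x *
                 (exp (x ^ 2 / 2) * exp (- (x ^ 2)) * exp (x ^ 2 / 2))); [rewrite H0; ring| ring].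
Qed.

Lemma phi_pk phi k x : phi k x = exp (- (x ^ 2) / 2) * pk phi k x.
Proof.
  unfold pk. transitivity (phi k x * (exp (- (x ^ 2) / 2) * exp (x ^ 2 / 2))); [|ring].
  rewrite <- exp_plus. replace (- (x ^ 2) / 2 + x ^ 2 / 2) with 0 by field. rewrite exp_0; ring.
Qed.

Definition Pc (phi : nat -> R -> R) (n N : nat) (c : list nat -> R) (x : Rn) : R :=
  fold_right (fun alpha acc => c alpha * prodn n (fun j => pk phi (nth j alpha 0%nat) (x j)) + acc) 0
             (multi_indices n N).

Definition Eg (n : nat) (x : Rn) : R := prodn n (fun j => exp (- (x j ^ 2) / 2)).

Lemma combo_eq phi n N c x : combo phi n N c x = Eg n x * Pc phi n N c x.
Proof.
  unfold combo, Pc. induction (multi_indices n N) as [|a l IH]; simpl; [ring|].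
  rewrite IH. unfold Phi, Eg.
  rewrite (prodn_ext n _ (fun j => exp (- (x j ^ 2) / 2) * pk phi (nth j a 0%nat) (x j)))
    by (intros; apply phi_pk).
  rewrite prodn_mul. ring.
Qed.

Lemma Eg2 n x : Eg n x ^ 2 = prodn n (fun j => exp (- (x j ^ 2))).
Proof.
  unfold Eg. simpl. rewrite Rmult_1_r, <- prodn_mul. apply prodn_ext; intros.
  rewrite <- exp_plus. f_equal. field.
Qed.

Lemma Eg_pos n x : 0 < Eg n x.
Proof. apply prodn_pos; intros; apply exp_pos. Qed.

Lemma abs2_eq phi n N c d x :
  abs2_f phi n N c d x = Eg n x ^ 2 * (Pc phi n N c x ^ 2 + Pc phi n N d x ^ 2).
Proof. unfold abs2_f. rewrite !combo_eq. ring. Qed.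

Lemma sumN_shift m F : sumN (S m) F = (F 0%nat + sumN m (fun j => F (S j)))%nat.
Proof. induction m; simpl in *; [lia|]. rewrite IHm. lia. Qed.

Lemma multi_sum n N alpha : In alpha (multi_indices n N) ->
  (sumN n (fun j => nth j alpha 0%nat) <= N)%nat.
Proof.
  revert N alpha; induction n; intros N alpha Hin; [simpl; lia|].
  assert (Hin' : In alpha (flat_map (fun a => map (cons a) (multi_indices n (N - a))) (seq 0 (S N)))) by exact Hin.
  apply in_flat_map in Hin' as [a [Ha Hin2]]. clear Hin. rename Hin2 into Hin.
  apply in_map_iff in Hin as [beta [E Hb]]. subst alpha.
  apply in_seq in Ha. rewrite sumN_shift. simpl.
  specialize (IHn _ _ Hb). lia.
Qed.

Lemma Pc_line phi n N c (a v : Rn) : hermite_functions phi ->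
  IsPoly N (fun t => Pc phi n N c (fun j => a j + t * v j)).
Proof.
  intros Hh. unfold Pc.
  assert (Hall : forall alpha, In alpha (multi_indices n N) ->
            IsPoly N (fun t => prodn n (fun j => pk phi (nth j alpha 0%nat) (a j + t * v j)))).
  { intros alpha Hin. apply (IsPoly_le (sumN n (fun j => nth j alpha 0%nat))); [apply multi_sum; auto|].
    apply (IsPoly_prodn n (fun j t => pk phi (nth j alpha 0%nat) (a j + t * v j))).
    intros j Hj. apply (IsPoly_ext _ (fun t => pk phi (nth j alpha 0%nat) (a j + v j * t))).
    - apply IsPoly_affine, pk_poly; auto.
    - intro; f_equal; ring. }
  induction (multi_indices n N) as [|al l IH]; simpl.
  - apply IsPoly_const.
  - apply (IsPoly_add N (fun t => c al * prodn n (fun j => pk phi (nth j al 0%nat) (a j + t * v j)))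
                        (fun t => fold_right _ 0 l)).
    + apply IsPoly_scal. apply Hall; left; auto.
    + apply IH. intros; apply Hall; right; auto.
Qed.

Lemma Pc_ext phi n N c x y : (forall j, (j < n)%nat -> x j = y j) -> Pc phi n N c x = Pc phi n N c y.
Proof.
  intros E. unfold Pc. induction (multi_indices n N); simpl; auto.
  rewrite IHl. f_equal. f_equal. apply prodn_ext. intros; rewrite E; auto.
Qed.

Lemma prodn_box_bounded m (F : nat -> R -> R) (x0 : Rn) rho :
  (forall j, exists B, forall t, x0 j - rho <= t <= x0 j + rho -> Rabs (F j t) <= B) ->
  exists B, forall x : Rn, (forall j, (j < m)%nat -> Rabs (x j - x0 j) <= rho) ->
    Rabs (prodn m (fun j => F j (x j))) <= B.
Proof.
  intros HF. induction m; simpl.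
  - exists 1. intros. rewrite Rabs_R1; lra.
  - destruct IHm as [B1 HB1]. destruct (HF m) as [B2 HB2].
    exists (Rabs B1 * Rabs B2). intros x Hx. rewrite Rabs_mult.
    apply Rmult_le_compat; try apply Rabs_pos.
    + eapply Rle_trans; [apply HB1|apply Rle_abs]. intros; apply Hx; lia.
    + eapply Rle_trans; [apply HB2|apply Rle_abs].
      specialize (Hx m ltac:(lia)). revert Hx; unfold Rabs; destruct Rcase_abs; intros; lra.
Qed.

Lemma Pc_bounded phi n N c (x0 : Rn) rho : hermite_functions phi ->
  exists B, forall x : Rn, (forall j, (j < n)%nat -> Rabs (x j - x0 j) <= rho) ->
    Rabs (Pc phi n N c x) <= B.
Proof.
  intros Hh. unfold Pc. induction (multi_indices n N) as [|al l IH]; simpl.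
  - exists 0. intros; rewrite Rabs_R0; lra.
  - destruct IH as [B1 HB1].
    destruct (prodn_box_bounded n (fun j => pk phi (nth j al 0%nat)) x0 rho) as [B2 HB2].
    { intro j. apply IsPoly_bounded with (d := nth j al 0%nat). apply pk_poly; auto. }
    exists (Rabs (c al) * Rabs B2 + B1). intros x Hx.
    eapply Rle_trans; [apply Rabs_triang|]. rewrite Rabs_mult.
    apply Rplus_le_compat; [|apply HB1; auto].
    apply Rmult_le_compat_l; [apply Rabs_pos|]. eapply Rle_trans; [apply HB2; auto|apply Rle_abs].
Qed.

Definition sumL {A} (f : A -> R) (l : list A) : R := fold_right (fun x acc => f x + acc) 0 l.

Lemma sumL_filter {A} (f : A -> R) (p : A -> bool) l :
  sumL f l = sumL f (filter p l) + sumL f (filter (fun x => negb (p x)) l).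
Proof. induction l; simpl; [ring|]. destruct (p a); simpl; rewrite IHl; ring. Qed.

Lemma sumL_le {A} (f g : A -> R) l : (forall x, In x l -> f x <= g x) -> sumL f l <= sumL g l.
Proof. induction l; simpl; intros; [lra|]. apply Rplus_le_compat; auto. Qed.

Lemma sumL_ext {A} (f g : A -> R) l : (forall x, In x l -> f x = g x) -> sumL f l = sumL g l.
Proof. induction l; simpl; intros; auto. rewrite H, IHl; auto. Qed.

Lemma sumL_scal {A} (f : A -> R) c l : sumL (fun x => f x * c) l = sumL f l * c.
Proof. induction l; simpl; [ring|]. rewrite IHl; ring. Qed.

Lemma sumL_nonneg {A} (f : A -> R) l : (forall x, In x l -> 0 <= f x) -> 0 <= sumL f l.
Proof. induction l; simpl; intros; [lra|]. apply Rplus_le_le_0_compat; auto. Qed.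

Lemma filter_eq_nodup (t : Z) (L : list Z) : NoDup L ->
  filter (fun z => Z.eqb z t) L = [] \/ filter (fun z => Z.eqb z t) L = [t].
Proof.
  induction L as [|a L IH]; simpl; intros Hnd; auto.
  inversion Hnd; subst. destruct (Z.eqb_spec a t).
  - subst. right. f_equal.
    clear IH Hnd. induction L; simpl; auto. destruct (Z.eqb_spec a t); [subst; exfalso; apply H1; left; auto|].
    apply IHL. intro; apply H1; right; auto. inversion H2; auto.
  - apply IH; auto.
Qed.

Lemma tele (a T : Z -> R) (lo : Z) (K : nat) (L : list Z) : NoDup L ->
  (forall z, In z L -> (lo <= z < lo + Z.of_nat K)%Z) ->
  (forall z, (lo <= z < lo + Z.of_nat K)%Z -> a z <= T (z - 1)%Z - T z) ->
  (forall z, (lo <= z < lo + Z.of_nat K)%Z -> T z <= T (z - 1)%Z) ->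
  sumL a L <= T (lo - 1)%Z - T (lo + Z.of_nat K - 1)%Z.
Proof.
  revert L; induction K; intros L Hnd Hin Ha HT.
  - destruct L as [|z L]. { simpl. rewrite Z.add_0_r. lra. }
    specialize (Hin z (or_introl eq_refl)). lia.
  - set (top := (lo + Z.of_nat K)%Z).
    rewrite (sumL_filter a (fun z => Z.eqb z top)).
    assert (H1 : sumL a (filter (fun z => Z.eqb z top) L) <= T (top - 1)%Z - T top).
    { destruct (filter_eq_nodup top L Hnd) as [E|E]; rewrite E; simpl.
      - pose proof (HT top ltac:(unfold top; lia)). lra.
      - pose proof (Ha top ltac:(unfold top; lia)). lra. }
    assert (H2 : sumL a (filter (fun z => negb (Z.eqb z top)) L) <= T (lo - 1)%Z - T (lo + Z.of_nat K - 1)%Z).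
    { apply IHK.
      - apply NoDup_filter; auto.
      - intros z Hz. apply filter_In in Hz as [Hz Hne]. specialize (Hin z Hz).
        destruct (Z.eqb_spec z top); simpl in Hne; [discriminate|]. unfold top in n. lia.
      - intros; apply Ha; lia.
      - intros; apply HT; lia. }
    replace (lo + Z.of_nat (S K) - 1)%Z with top by (unfold top; lia).
    replace (top - 1)%Z with (lo + Z.of_nat K - 1)%Z in H1 by (unfold top; lia).
    lra.
Qed.

Definition vz (z : Z) : R := if Z.leb 0 z then IZR z + 1 else IZR z.
Definition az (u : R) (z : Z) : R := u / (u ^ 2 + vz z ^ 2).

Lemma az_nonneg u z : 0 < u -> 0 <= az u z.
Proof.
  intros; unfold az. apply Rlt_le, Rdiv_lt_0_compat; auto.
  assert (0 <= vz z ^ 2) by (simpl; nra). nra.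
Qed.

Lemma key_ineq u m : 1 <= u -> 1 <= m -> u / (u ^ 2 + m ^ 2) <= 2 * u / ((u + m - 1) * (u + m)).
Proof.
  intros Hu Hm.
  assert (0 < (u + m - 1) * (u + m)) by nra.
  assert (0 < u ^ 2 + m ^ 2) by nra.
  unfold Rdiv. apply (Rmult_le_reg_r ((u ^ 2 + m ^ 2) * ((u + m - 1) * (u + m)))); [nra|].
  replace (u * / (u ^ 2 + m ^ 2) * ((u ^ 2 + m ^ 2) * ((u + m - 1) * (u + m)))) with (u * ((u + m - 1) * (u + m))) by (field; lra).
  replace (2 * u * / ((u + m - 1) * (u + m)) * ((u ^ 2 + m ^ 2) * ((u + m - 1) * (u + m)))) with (2 * u * (u ^ 2 + m ^ 2)) by (field; lra).
  assert ((u + m - 1) * (u + m) <= 2 * (u ^ 2 + m ^ 2)) by (pose proof (Rle_0_sqr (u - m)); unfold Rsqr in *; nra).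
  replace (2 * u * (u ^ 2 + m ^ 2)) with (u * (2 * (u ^ 2 + m ^ 2))) by ring.
  apply Rmult_le_compat_l; lra.
Qed.

Lemma Zbounds (L : list Z) : exists K : nat, forall z, In z L -> (- Z.of_nat K <= z < Z.of_nat K)%Z.
Proof.
  induction L as [|a L [K HK]]; [exists 0%nat; simpl; tauto|].
  exists (K + Z.to_nat (Z.abs a) + 1)%nat. intros z [E|Hz]; [subst|specialize (HK z Hz)]; lia.
Qed.

Lemma sum1d u L : 1 <= u -> NoDup L -> sumL (az u) L <= 4.
Proof.
  intros Hu Hnd. destruct (Zbounds L) as [K HK].
  rewrite (sumL_filter _ (fun z => Z.leb 0 z)).
  assert (A : sumL (az u) (filter (fun z => Z.leb 0 z) L) <= 2).
  { set (T := fun z : Z => 2 * u / (u + IZR z + 1)).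
    eapply Rle_trans.
    - apply (tele (az u) T 0 K); [apply NoDup_filter; auto| | |].
      + intros z Hz. apply filter_In in Hz as [Hz Hp]. apply Z.leb_le in Hp. specialize (HK z Hz). lia.
      + intros z Hz. unfold az, vz, T. destruct (Z.leb_spec 0 z); [|lia].
        rewrite minus_IZR. assert (0 <= IZR z) by (apply IZR_le; lia).
        eapply Rle_trans; [apply (key_ineq u (IZR z + 1)); lra|]. right. field. lra.
      + intros z Hz. unfold T. rewrite minus_IZR. assert (0 <= IZR z) by (apply IZR_le; lia).
        unfold Rdiv. apply Rmult_le_compat_l; [lra|]. apply Rinv_le_contravar; lra.
    - unfold T. replace (IZR (0 - 1)) with (-1) by reflexivity.
      replace (IZR (0 + Z.of_nat K - 1)) with (INR K - 1) by (rewrite minus_IZR, plus_IZR, <- INR_IZR_INZ; simpl; ring).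
      replace (2 * u / (u + -1 + 1)) with 2 by (field; lra).
      assert (0 <= INR K) by apply pos_INR.
      assert (0 < 2 * u / (u + (INR K - 1) + 1)) by (apply Rdiv_lt_0_compat; lra).
      lra. }
  assert (B : sumL (az u) (filter (fun z => negb (Z.leb 0 z)) L) <= 2).
  { set (T := fun z : Z => - (2 * u / (u - IZR z - 1))).
    eapply Rle_trans.
    - apply (tele (az u) T (- Z.of_nat K) K); [apply NoDup_filter; auto| | |].
      + intros z Hz. apply filter_In in Hz as [Hz Hp].
        destruct (Z.leb_spec 0 z); simpl in Hp; [discriminate|]. specialize (HK z Hz). lia.
      + intros z Hz. unfold az, vz, T. destruct (Z.leb_spec 0 z); [lia|].
        rewrite minus_IZR. assert (IZR z <= -1) by (apply IZR_le; lia).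
        replace (vz z) with (IZR z) by (unfold vz; destruct (Z.leb_spec 0 z); auto; lia).
        replace (IZR z ^ 2) with ((- IZR z) ^ 2) by ring.
        eapply Rle_trans; [apply (key_ineq u (- IZR z)); lra|]. right. field. lra.
      + intros z Hz. unfold T. rewrite minus_IZR. assert (IZR z <= -1) by (apply IZR_le; lia).
        apply Ropp_le_contravar. unfold Rdiv. apply Rmult_le_compat_l; [lra|].
        apply Rinv_le_contravar; lra.
    - unfold T.
      replace (IZR (- Z.of_nat K - 1)) with (- INR K - 1) by (rewrite minus_IZR, opp_IZR, <- INR_IZR_INZ; simpl; ring).
      replace (IZR (- Z.of_nat K + Z.of_nat K - 1)) with (-1) by (rewrite Z.add_opp_diag_l; reflexivity).
      replace (- (2 * u / (u - -1 - 1))) with (-2) by (field; lra).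
      assert (0 <= INR K) by apply pos_INR.
      assert (0 < 2 * u / (u - (- INR K - 1) - 1)) by (apply Rdiv_lt_0_compat; lra).
      lra. }
  lra.
Qed.

Lemma Forall_filter' {A} (P : A -> Prop) f l : Forall P l -> Forall P (filter f l).
Proof. induction 1; simpl; auto. destruct (f x); auto. Qed.

Lemma FOP_filter {A} (Rl : A -> A -> Prop) f l : ForallOrdPairs Rl l -> ForallOrdPairs Rl (filter f l).
Proof.
  induction 1; simpl; [constructor|]. destruct (f a); auto.
  constructor; auto. apply Forall_filter'; auto.
Qed.

Lemma FOP_impl {A} (Rl R' : A -> A -> Prop) l :
  (forall x y, In x l -> In y l -> Rl x y -> R' x y) -> ForallOrdPairs Rl l -> ForallOrdPairs R' l.
Proof.
  induction 2; constructor.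
  - rewrite Forall_forall in *. intros y Hy. apply H; simpl; auto.
  - apply IHForallOrdPairs. intros; apply H; simpl; auto.
Qed.

Lemma filter_length_lt {A} (f : A -> bool) x l : f x = false -> (length (filter f (x :: l)) <= length l)%nat.
Proof. intros E; simpl; rewrite E. apply filter_length_le. Qed.

Lemma prod_count {A : Type} (a : Z -> R) (B : R) :
  (forall z, 0 <= a z) -> 0 <= B -> (forall L, NoDup L -> sumL a L <= B) ->
  forall n (Ss : list A) (key : A -> nat -> Z),
  ForallOrdPairs (fun p q => exists l, (l < n)%nat /\ key p l <> key q l) Ss ->
  sumL (fun p => prodn n (fun j => a (key p j))) Ss <= B ^ n.
Proof.
  intros Ha HB HL n. induction n as [|m IHm]; intros Ss key HS.
  - destruct Ss as [|x [|y S']]; simpl; try lra.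
    inversion HS; subst. inversion H1; subst. destruct H3 as [l [Hl _]]; lia.
  - assert (Main : forall len (S1 : list A), (length S1 <= len)%nat ->
        ForallOrdPairs (fun p q => exists l, (l < S m)%nat /\ key p l <> key q l) S1 ->
        exists U, NoDup U /\ (forall u, In u U -> exists p, In p S1 /\ key p m = u) /\
          sumL (fun p => prodn (S m) (fun j => a (key p j))) S1 <= B ^ m * sumL a U).
    { induction len; intros S0 Hlen HS0.
      - destruct S0; [|simpl in Hlen; lia]. exists []. simpl; repeat split; auto; [constructor|tauto|lra].
      - destruct S0 as [|x S'].
        + exists []. simpl; repeat split; auto; [constructor|tauto|lra].
        + set (t := key x m).
          set (f := fun p => Z.eqb (key p m) t).
          rewrite (sumL_filter _ f).
          assert (HA : sumL (fun p => prodn (S m) (fun j => a (key p j))) (filter f (x :: S')) <= a t * B ^ m).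
          { rewrite (sumL_ext _ (fun p => prodn m (fun j => a (key p j)) * a t)).
            - rewrite sumL_scal. rewrite Rmult_comm. apply Rmult_le_compat_l; [apply Ha|].
              apply IHm. apply FOP_filter with (f := f) in HS0.
              eapply FOP_impl; [|exact HS0].
              intros p q Hp Hq [l [Hl Hne]]. apply filter_In in Hp as [_ Hp]. apply filter_In in Hq as [_ Hq].
              unfold f in Hp, Hq. apply Z.eqb_eq in Hp, Hq.
              exists l; split; auto. destruct (Nat.eq_dec l m); [subst; congruence|lia].
            - intros p Hp. apply filter_In in Hp as [_ Hp]. unfold f in Hp. apply Z.eqb_eq in Hp.
              simpl. rewrite Hp. auto. }
          destruct (IHlen (filter (fun p => negb (f p)) (x :: S'))) as [U' [HU'nd [HU'in HU'sum]]].
          { eapply Nat.le_trans; [apply filter_length_lt|]; [unfold f, t; rewrite Z.eqb_refl; auto|simpl in Hlen; lia]. }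
          { apply FOP_filter; auto. }
          exists (t :: U'). split; [|split].
          * constructor; auto. intro Hin. destruct (HU'in t Hin) as [p [Hp Ep]].
            apply filter_In in Hp as [_ Hp]. unfold f in Hp. rewrite Ep, Z.eqb_refl in Hp. discriminate.
          * intros u [E|Hu]; [exists x; split; [left|]; auto|].
            destruct (HU'in u Hu) as [p [Hp Ep]]. apply filter_In in Hp as [Hp _]. exists p; auto.
          * change (sumL a (t :: U')) with (a t + sumL a U'). rewrite Rmult_plus_distr_l, (Rmult_comm (B ^ m) (a t)). lra. }
    destruct (Main (length Ss) Ss (le_n _) HS) as [U [HUnd [_ HUsum]]].
    eapply Rle_trans; [exact HUsum|]. change (B ^ S m) with (B * B ^ m). rewrite (Rmult_comm B).
    apply Rmult_le_compat_l; [apply pow_le; auto|]. apply HL; auto.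
Qed.

Fixpoint sumR (n : nat) (F : nat -> R) : R :=
  match n with O => 0 | S m => sumR m F + F m end.

Lemma sumR_nonneg n F : (forall j, (j < n)%nat -> 0 <= F j) -> 0 <= sumR n F.
Proof. induction n; simpl; intros; [lra|]. apply Rplus_le_le_0_compat; auto. Qed.

Lemma sumR_term n F j : (forall j, (j < n)%nat -> 0 <= F j) -> (j < n)%nat -> F j <= sumR n F.
Proof.
  induction n; simpl; intros; [lia|].
  destruct (Nat.eq_dec j n); [subst; pose proof (sumR_nonneg n F ltac:(intros; apply H; lia)); lra|].
  pose proof (H n ltac:(lia)). pose proof (IHn ltac:(intros; apply H; lia) ltac:(lia)). lra.
Qed.

Lemma sumR_le n F G : (forall j, (j < n)%nat -> F j <= G j) -> sumR n F <= sumR n G.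
Proof. induction n; simpl; intros; [lra|]. apply Rplus_le_compat; auto. Qed.

Lemma sumR_plus n F G : sumR n (fun j => F j + G j) = sumR n F + sumR n G.
Proof. induction n; simpl; [ring|]. rewrite IHn; ring. Qed.

Lemma sumR_const n c : sumR n (fun _ => c) = INR n * c.
Proof. induction n; simpl; [ring|]. rewrite IHn. destruct n; simpl; ring. Qed.

Lemma sumR_zero n F : (forall j, (j < n)%nat -> 0 <= F j) -> sumR n F = 0 -> forall j, (j < n)%nat -> F j = 0.
Proof.
  intros Hn Hs j Hj. pose proof (sumR_term n F j Hn Hj). pose proof (Hn j Hj). lra.
Qed.

Definition polyN (n N : nat) (P : Rn -> R) : Prop :=
  (forall a v : Rn, IsPoly N (fun t => P (fun j => a j + t * v j))) /\
  (forall x y : Rn, (forall j, (j < n)%nat -> x j = y j) -> P x = P y).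

Definition Box (n : nat) (x0 : Rn) (rho : R) (x : Rn) : Prop :=
  forall j, (j < n)%nat -> Rabs (x j - x0 j) <= rho.

Lemma upper_pointwise n N P x0 rho M : polyN n N P -> 0 < rho ->
  (forall x, Box n x0 rho x -> Rabs (P x) <= M) ->
  forall x, Rabs (P x) <= M * (3 * (1 + sumR n (fun j => Rabs (x j - x0 j)) / rho)) ^ N.
Proof.
  intros [Hl He] Hr HM x.
  set (S := sumR n (fun j => Rabs (x j - x0 j))).
  assert (HS0 : 0 <= S) by (apply sumR_nonneg; intros; apply Rabs_pos).
  assert (HM0 : 0 <= M).
  { specialize (HM x0). pose proof (Rabs_pos (P x0)). assert (Box n x0 rho x0).
    { intros j _. replace (x0 j - x0 j) with 0 by ring. rewrite Rabs_R0; lra. } specialize (HM H0). lra. }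
  destruct (Req_dec S 0) as [E|NE].
  - rewrite E. unfold Rdiv. rewrite Rmult_0_l, Rplus_0_r, Rmult_1_r.
    rewrite (He x x0).
    + eapply Rle_trans; [apply HM; intros j _; replace (x0 j - x0 j) with 0 by ring; rewrite Rabs_R0; lra|].
      rewrite <- (Rmult_1_r M) at 1. apply Rmult_le_compat_l; auto. apply pow_R1_Rle; lra.
    + intros j Hj. pose proof (sumR_zero n _ (fun j _ => Rabs_pos (x j - x0 j)) E j Hj).
      revert H; unfold Rabs; destruct Rcase_abs; intros; lra.
  - assert (HSp : 0 < S) by lra.
    set (v := fun j => rho * (x j - x0 j) / S).
    set (q := fun t => P (fun j => x0 j + t * v j)).
    assert (Hq : IsPoly N q) by apply Hl.
    assert (Ex : P x = q (S / rho)).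
    { unfold q. apply He. intros j _. unfold v. field. lra. }
    rewrite Ex. eapply Rle_trans; [apply (lemmaA N q M Hq)|].
    + intros t Ht. unfold q. apply HM. intros j Hj.
      replace (x0 j + t * v j - x0 j) with (t * v j) by ring.
      unfold v. rewrite Rabs_mult.
      assert (Rabs (x j - x0 j) <= S) by (apply (sumR_term n (fun j => Rabs (x j - x0 j))); auto; intros; apply Rabs_pos).
      unfold Rdiv. rewrite !Rabs_mult, Rabs_inv, (Rabs_right rho), (Rabs_right S) by lra.
      assert (Rabs t <= 1) by (apply Rabs_le; lra).
      assert (rho * Rabs (x j - x0 j) * / S <= rho).
      { apply (Rmult_le_reg_r S); auto. rewrite Rmult_assoc, Rinv_l by lra. nra. }
      assert (0 <= rho * Rabs (x j - x0 j) * / S).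
      { apply Rmult_le_pos; [apply Rmult_le_pos; [lra|apply Rabs_pos]|left; apply Rinv_0_lt_compat; lra]. }
      pose proof (Rabs_pos t). nra.
    + rewrite (Rabs_right (S / rho)); [lra|]. apply Rle_ge. unfold Rdiv. apply Rmult_le_pos; [lra|left; apply Rinv_0_lt_compat; lra].
Qed.

Lemma lip_multi n N P x0 rho M : polyN n N P -> 0 < rho ->
  (forall x, Box n x0 rho x -> Rabs (P x) <= M) ->
  forall x y, Box n x0 rho x -> Box n x0 rho y ->
  Rabs (P y - P x) <= 4 * M * 24 ^ N / rho * sumR n (fun j => Rabs (y j - x j)).
Proof.
  intros [Hl He] Hr HM x y Hx Hy.
  set (z := fun m => fun j => if Nat.ltb j m then y j else x j).
  assert (Hz : forall m, Box n x0 rho (z m)).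
  { intros m j Hj. unfold z. destruct (Nat.ltb j m); auto. }
  assert (Step : forall m, (m <= n)%nat -> Rabs (P (z m) - P x) <= 4 * M * 24 ^ N / rho * sumR m (fun j => Rabs (y j - x j))).
  { induction m; intros Hm.
    - simpl. rewrite Rmult_0_r. rewrite (He (z 0%nat) x); [|intros; unfold z; auto].
      replace (P x - P x) with 0 by ring. rewrite Rabs_R0; lra.
    - set (q := fun t => P (fun j => z m j + t * (if Nat.eqb j m then 1 else 0))).
      assert (Hq : IsPoly N q) by apply Hl.
      assert (E0 : q 0 = P (z m)) by (unfold q; apply He; intros; ring).
      assert (E1 : q (y m - x m) = P (z (S m))).
      { unfold q. apply He. intros j Hj. unfold z.
        destruct (Nat.eqb_spec j m).
        - subst. rewrite Nat.ltb_irrefl. replace (Nat.ltb m (S m)) with true by (symmetry; apply Nat.ltb_lt; lia). ring.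
        - destruct (Nat.ltb_spec j m), (Nat.ltb_spec j (S m)); try lia; ring. }
      set (c := x0 m - x m).
      assert (Hb : forall t, c - rho <= t <= c + rho -> Rabs (q t) <= M).
      { intros t Ht. unfold q. apply HM. intros j Hj.
        destruct (Nat.eqb_spec j m).
        - subst. unfold z. rewrite Nat.ltb_irrefl. apply Rabs_le. unfold c in Ht. lra.
        - rewrite Rmult_0_r, Rplus_0_r. apply Hz; auto. }
      assert (Hxm := Hx m ltac:(lia)). assert (Hym := Hy m ltac:(lia)).
      pose proof (lemmaLip N q M c rho Hr Hq Hb 0 (y m - x m)) as HL.
      assert (Rabs (q (y m - x m) - q 0) <= 4 * M * 24 ^ N / rho * Rabs (y m - x m)).
      { replace (Rabs (y m - x m)) with (Rabs (y m - x m - 0)) by (f_equal; ring). apply HL.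
        - unfold c. revert Hxm; unfold Rabs; destruct Rcase_abs; intros; lra.
        - unfold c. revert Hym; unfold Rabs; destruct Rcase_abs; intros; lra. }
      rewrite E0, E1 in H.
      specialize (IHm ltac:(lia)).
      replace (P (z (S m)) - P x) with ((P (z (S m)) - P (z m)) + (P (z m) - P x)) by ring.
      eapply Rle_trans; [apply Rabs_triang|]. simpl sumR. rewrite Rmult_plus_distr_l. lra. }
  specialize (Step n (le_n n)).
  rewrite (He y (z n)); auto.
  intros j Hj. unfold z. replace (Nat.ltb j n) with true by (symmetry; apply Nat.ltb_lt; auto). auto.
Qed.

Lemma pow2_split L0 N : 2 ^ (L0 + 5 * N) = 2 ^ L0 * 32 ^ N.
Proof. rewrite pow_add, pow_mult. f_equal. f_equal. simpl; ring. Qed.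

Lemma lower_cube n N P x0 rho M xs : (1 <= n)%nat -> polyN n N P -> 0 < rho ->
  (forall x, Box n x0 rho x -> Rabs (P x) <= M) -> 0 < M -> Box n x0 rho xs -> M / 2 < Rabs (P xs) ->
  forall L0 : nat, 32 * INR n / rho <= 2 ^ L0 ->
  exists z : nat -> Z, forall y, dcube n (L0 + 5 * N) z y -> Box n x0 rho y /\ M / 4 <= Rabs (P y).
Proof.
  intros Hn HP Hr HM HM0 Hxs Hbig L0 HL0.
  assert (Hn' : 1 <= INR n) by (apply (le_INR 1); auto).
  assert (H24 : 1 <= 24 ^ N) by (apply pow_R1_Rle; lra).
  set (delta := rho / (16 * INR n * 24 ^ N)).
  assert (Hd0 : 0 < delta) by (apply Rdiv_lt_0_compat; [lra|]; nra).
  assert (Hdr : delta <= rho).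
  { unfold delta. assert (HK : 1 <= 16 * INR n * 24 ^ N) by nra.
    assert (/ (16 * INR n * 24 ^ N) <= 1) by (rewrite <- Rinv_1; apply Rinv_le_contravar; lra).
    assert (0 < / (16 * INR n * 24 ^ N)) by (apply Rinv_0_lt_compat; lra).
    unfold Rdiv. nra. }
  set (u := 2 ^ (L0 + 5 * N)).
  assert (Hu : 0 < u) by (apply pow_lt; lra).
  assert (Hdu : 2 <= delta * u).
  { assert (HK : 0 < 16 * INR n * 24 ^ N) by nra.
    assert (E : delta * u = (2 ^ L0 * rho * 32 ^ N) * / (16 * INR n * 24 ^ N))
      by (unfold delta, u; rewrite pow2_split; field; lra).
    rewrite E.
    assert (24 ^ N <= 32 ^ N) by (apply pow_incr; lra).
    assert (Hr2 : 32 * INR n <= 2 ^ L0 * rho).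
    { apply (Rmult_le_compat_r rho) in HL0; [|lra]. unfold Rdiv in HL0.
      rewrite Rmult_assoc, Rinv_l, Rmult_1_r in HL0 by lra. lra. }
    assert (32 * INR n * 24 ^ N <= 2 ^ L0 * rho * 32 ^ N) by (apply Rmult_le_compat; nra).
    replace 2 with ((2 * (16 * INR n * 24 ^ N)) * / (16 * INR n * 24 ^ N)) at 1 by (field; lra).
    apply Rmult_le_compat_r; [left; apply Rinv_0_lt_compat; lra|]. lra. }
  set (l := fun j => if Rle_dec (xs j) (x0 j) then xs j else xs j - delta).
  exists (fun j => up (l j * u)).
  intros y Hy.
  assert (Hyj : forall j, (j < n)%nat -> l j <= y j <= l j + delta).
  { intros j Hj. specialize (Hy j Hj). simpl in Hy. fold u in Hy.
    destruct (archimed (l j * u)) as [A1 A2].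
    destruct Hy as [Y1 Y2].
    set (Z0 := IZR (up (l j * u))) in *.
    assert (Z0 <= y j * u).
    { apply (Rmult_le_compat_r u) in Y1; [|lra]. unfold Rdiv in Y1. rewrite Rmult_assoc, Rinv_l, Rmult_1_r in Y1 by lra. auto. }
    assert (y j * u <= Z0 + 1).
    { apply (Rmult_le_compat_r u) in Y2; [|lra]. unfold Rdiv in Y2. rewrite Rmult_assoc, Rinv_l, Rmult_1_r in Y2 by lra. auto. }
    split.
    - apply (Rmult_le_reg_r u); auto. lra.
    - apply (Rmult_le_reg_r u); auto. lra. }
  assert (Hyx : forall j, (j < n)%nat -> Rabs (y j - xs j) <= delta /\ Rabs (y j - x0 j) <= rho).
  { intros j Hj. specialize (Hyj j Hj). specialize (Hxs j Hj).
    unfold l in Hyj. revert Hxs. unfold Rabs. destruct (Rle_dec (xs j) (x0 j));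
    repeat destruct Rcase_abs; intros; split; lra. }
  assert (HB : Box n x0 rho y) by (intros j Hj; apply Hyx; auto).
  split; auto.
  pose proof (lip_multi n N P x0 rho M HP Hr HM xs y Hxs HB) as HLip.
  assert (sumR n (fun j => Rabs (y j - xs j)) <= INR n * delta).
  { rewrite <- sumR_const. apply sumR_le. intros; apply Hyx; auto. }
  assert (4 * M * 24 ^ N / rho * (INR n * delta) = M / 4).
  { unfold delta. field. split; nra. }
  assert (0 <= 4 * M * 24 ^ N / rho).
  { unfold Rdiv. apply Rmult_le_pos; [nra|left; apply Rinv_0_lt_compat; lra]. }
  assert (Rabs (P y - P xs) <= M / 4).
  { eapply Rle_trans; [exact HLip|]. rewrite <- H0. apply Rmult_le_compat_l; auto. }
  assert (Rabs (P xs) <= Rabs (P y) + Rabs (P y - P xs)).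
  { replace (P xs) with (P y - (P y - P xs)) at 1 by ring.
    eapply Rle_trans; [apply Rabs_triang|]. rewrite Rabs_Ropp. lra. }
  lra.
Qed.

Lemma exp_neg_le t : exp (- (t ^ 2)) <= / (1 + t ^ 2).
Proof.
  rewrite exp_Ropp. apply Rinv_le_contravar.
  - assert (0 <= t ^ 2) by (simpl; nra). lra.
  - apply exp_ineq1_le.
Qed.

Lemma um_bound u m : 0 <= u -> (1 <= m)%nat -> u ^ m * exp (- u) <= INR m ^ m.
Proof.
  intros Hu Hm. assert (Hm' : 0 < INR m) by (apply lt_0_INR; lia).
  assert (H1 : u / INR m <= exp (u / INR m - 1)) by (pose proof (exp_ineq1_le (u / INR m - 1)); lra).
  assert (H2 : (u / INR m) ^ m <= exp (u - INR m)).
  { eapply Rle_trans; [apply pow_incr; split; [unfold Rdiv; apply Rmult_le_pos; [lra|left; apply Rinv_0_lt_compat; lra]|exact H1]|].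
    rewrite exp_pow_nat. right. f_equal. field. lra. }
  assert (E : u ^ m = INR m ^ m * (u / INR m) ^ m).
  { rewrite <- Rpow_mult_distr. f_equal. field. lra. }
  rewrite E. rewrite Rmult_assoc. rewrite <- (Rmult_1_r (INR m ^ m)) at 2.
  apply Rmult_le_compat_l; [apply pow_le; lra|].
  assert (exp (- u) > 0) by apply exp_pos.
  eapply Rle_trans; [apply Rmult_le_compat_r; [lra|exact H2]|].
  rewrite <- exp_plus. replace (u - INR m + - u) with (- INR m) by ring.
  rewrite <- exp_0. left. apply exp_increasing. lra.
Qed.

Definition SN (N : nat) : R := 4 ^ (N + 1) * (1 + INR (N + 1) ^ (N + 1)).

Lemma SN_bound t N : exp (- (t ^ 2)) * (1 + Rabs t) ^ (2 * N) <= SN N * / (1 + t ^ 2).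
Proof.
  set (a := Rabs t). assert (Ha : 0 <= a) by apply Rabs_pos.
  assert (Ht2 : t ^ 2 = a ^ 2) by (unfold a; rewrite <- (pow2_abs t); auto).
  rewrite Ht2. set (m := (N + 1)%nat).
  assert (Hp : 0 < 1 + a ^ 2) by (simpl; nra).
  apply (Rmult_le_reg_r (1 + a ^ 2)); auto. replace (SN N * / (1 + a ^ 2) * (1 + a ^ 2)) with (SN N) by (field; lra).
  assert (E1 : (1 + a) ^ (2 * N) * (1 + a ^ 2) <= ((1 + a) ^ 2) ^ m).
  { unfold m. rewrite <- pow_mult. replace (2 * (N + 1))%nat with (2 * N + 2)%nat by lia.
    rewrite pow_add. apply Rmult_le_compat_l; [apply pow_le; lra|]. simpl; nra. }
  assert (E2 : ((1 + a) ^ 2) ^ m <= 4 ^ m * (1 + (a ^ 2) ^ m)).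
  { destruct (Rle_dec a 1).
    - eapply Rle_trans; [apply pow_incr; split; [simpl; nra| instantiate (1 := 4); simpl; nra]|].
      assert (0 <= (a ^ 2) ^ m) by (apply pow_le; simpl; nra).
      assert (0 <= 4 ^ m) by (apply pow_le; lra). nra.
    - eapply Rle_trans; [apply pow_incr; split; [simpl; nra| instantiate (1 := 4 * a ^ 2); simpl; nra]|].
      rewrite Rpow_mult_distr. assert (0 <= 4 ^ m) by (apply pow_le; lra). nra. }
  assert (E3 : (a ^ 2) ^ m * exp (- (a ^ 2)) <= INR m ^ m).
  { apply um_bound; [simpl; nra|unfold m; lia]. }
  assert (E4 : exp (- (a ^ 2)) <= 1).
  { eapply Rle_trans; [apply exp_neg_le|]. rewrite <- Rinv_1. apply Rinv_le_contravar; [lra|]. simpl; nra. }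
  unfold SN. fold m.
  assert (0 < exp (- (a ^ 2))) by apply exp_pos.
  assert (0 <= 4 ^ m) by (apply pow_le; lra).
  assert (0 <= (1 + a) ^ (2 * N)) by (apply pow_le; lra).
  apply Rle_trans with (exp (- (a ^ 2)) * (4 ^ m * (1 + (a ^ 2) ^ m))).
  - rewrite (Rmult_assoc (exp (- (a ^ 2)))). apply Rmult_le_compat_l; lra.
  - replace (exp (- (a ^ 2)) * (4 ^ m * (1 + (a ^ 2) ^ m))) with
        (4 ^ m * (exp (- (a ^ 2)) + (a ^ 2) ^ m * exp (- (a ^ 2)))) by ring.
    apply Rmult_le_compat_l; auto. lra.
Qed.

Lemma argmax n (f : nat -> R) : (1 <= n)%nat -> exists j0, (j0 < n)%nat /\ forall j, (j < n)%nat -> f j <= f j0.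
Proof.
  induction n; intros Hn; [lia|].
  destruct n.
  - exists 0%nat; split; [lia|]. intros j Hj; assert (j = 0%nat) by lia; subst; lra.
  - destruct (IHn ltac:(lia)) as [j0 [Hj0 H]].
    destruct (Rle_dec (f (S n)) (f j0)).
    + exists j0; split; [lia|]. intros j Hj. destruct (Nat.eq_dec j (S n)); [subst; auto|apply H; lia].
    + exists (S n); split; [lia|]. intros j Hj. destruct (Nat.eq_dec j (S n)); [subst; lra|].
      pose proof (H j ltac:(lia)). lra.
Qed.

Lemma prodn_update n F j0 c : (j0 < n)%nat ->
  prodn n (fun j => if Nat.eqb j j0 then c * F j else F j) = c * prodn n F.
Proof.
  induction n; intros Hj; [lia|]. simpl.
  destruct (Nat.eqb_spec n j0).
  - subst. rewrite (prodn_ext j0 _ F); [ring|]. intros j Hj'. destruct (Nat.eqb_spec j j0); [lia|auto].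
  - rewrite IHn by lia. ring.
Qed.

Definition Wt (n : nat) (x : Rn) : R := prodn n (fun j => / (1 + x j ^ 2)).

Definition K0 (n : nat) (x0 : Rn) (rho : R) : R := 1 + (1 + sumR n (fun j => Rabs (x0 j))) / rho.

Lemma weight_bound n N (x x0 : Rn) rho : (1 <= n)%nat -> 0 < rho ->
  prodn n (fun j => exp (- (x j ^ 2))) * (3 * (1 + sumR n (fun j => Rabs (x j - x0 j)) / rho)) ^ (2 * N)
  <= (9 * K0 n x0 rho ^ 2 * INR n ^ 2) ^ N * SN N * Wt n x.
Proof.
  intros Hn Hr.
  set (S := sumR n (fun j => Rabs (x j - x0 j))).
  set (T := sumR n (fun j => Rabs (x j))).
  set (A := sumR n (fun j => Rabs (x0 j))).
  assert (HT0 : 0 <= T) by (apply sumR_nonneg; intros; apply Rabs_pos).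
  assert (HA0 : 0 <= A) by (apply sumR_nonneg; intros; apply Rabs_pos).
  assert (HS0 : 0 <= S) by (apply sumR_nonneg; intros; apply Rabs_pos).
  assert (HST : S <= T + A).
  { unfold S, T, A. rewrite <- sumR_plus. apply sumR_le. intros j _.
    unfold Rminus. eapply Rle_trans; [apply Rabs_triang|]. rewrite Rabs_Ropp. lra. }
  set (k := K0 n x0 rho).
  assert (Hk1 : 1 <= k).
  { unfold k, K0. fold A. assert (0 <= (1 + A) / rho) by (unfold Rdiv; apply Rmult_le_pos; [lra|left; apply Rinv_0_lt_compat; lra]). lra. }
  assert (H1 : 1 + S / rho <= k * (1 + T)).
  { unfold k, K0. fold A.
    assert (S / rho <= (T + A) / rho) by (unfold Rdiv; apply Rmult_le_compat_r; [left; apply Rinv_0_lt_compat|]; lra).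
    assert (T / rho <= (1 + (1 + A) / rho) * T).
    { assert (T / rho <= (1 + A) / rho * T).
      { unfold Rdiv. rewrite (Rmult_comm T). rewrite Rmult_assoc, (Rmult_comm (/ rho)).
        rewrite <- Rmult_assoc. apply Rmult_le_compat_r; [left; apply Rinv_0_lt_compat; lra|]. nra. }
      nra. }
    assert (A / rho <= (1 + A) / rho) by (unfold Rdiv; apply Rmult_le_compat_r; [left; apply Rinv_0_lt_compat|]; lra).
    replace ((T + A) / rho) with (T / rho + A / rho) in H by (field; lra).
    assert (0 <= (1 + A) / rho) by (unfold Rdiv; apply Rmult_le_pos; [lra|left; apply Rinv_0_lt_compat; lra]).
    nra. }
  destruct (argmax n (fun j => Rabs (x j)) Hn) as [j0 [Hj0 Hmax]].
  set (a0 := Rabs (x j0)).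
  assert (Hn1 : 1 <= INR n) by (apply (le_INR 1); auto).
  assert (H2 : 1 + T <= INR n * (1 + a0)).
  { assert (T <= INR n * a0) by (unfold T; rewrite <- sumR_const; apply sumR_le; auto).
    assert (0 <= a0) by apply Rabs_pos. nra. }
  assert (H3 : 3 * (1 + S / rho) <= 3 * k * INR n * (1 + a0)).
  { assert (0 <= a0) by apply Rabs_pos. nra. }
  assert (H30 : 0 <= 3 * (1 + S / rho)).
  { assert (0 <= S / rho) by (unfold Rdiv; apply Rmult_le_pos; [lra|left; apply Rinv_0_lt_compat; lra]). lra. }
  assert (H4 : (3 * (1 + S / rho)) ^ (2 * N) <= (9 * k ^ 2 * INR n ^ 2) ^ N * (1 + a0) ^ (2 * N)).
  { eapply Rle_trans; [apply pow_incr; split; [exact H30|exact H3]|].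
    rewrite !pow_mult, <- Rpow_mult_distr. right. f_equal. simpl. ring. }
  assert (HP0 : 0 <= prodn n (fun j => exp (- (x j ^ 2)))) by (apply prodn_nonneg; intros; left; apply exp_pos).
  eapply Rle_trans; [apply Rmult_le_compat_l; [exact HP0|exact H4]|].
  replace (prodn n (fun j => exp (- (x j ^ 2))) * ((9 * k ^ 2 * INR n ^ 2) ^ N * (1 + a0) ^ (2 * N)))
    with ((9 * k ^ 2 * INR n ^ 2) ^ N * ((1 + a0) ^ (2 * N) * prodn n (fun j => exp (- (x j ^ 2))))) by ring.
  rewrite (Rmult_assoc ((9 * k ^ 2 * INR n ^ 2) ^ N)). apply Rmult_le_compat_l; [apply pow_le; nra|].
  rewrite <- (prodn_update n _ j0) by auto.
  unfold Wt. rewrite <- (prodn_update n _ j0) by auto.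
  apply prodn_le. intros j Hj. destruct (Nat.eqb_spec j j0).
  - subst j. split; [apply Rmult_le_pos; [apply pow_le; unfold a0; pose proof (Rabs_pos (x j0)); lra|left; apply exp_pos]|].
    rewrite Rmult_comm. unfold a0. apply SN_bound.
  - split; [left; apply exp_pos|]. apply exp_neg_le.
Qed.

Lemma lub_nonneg n A g I : is_lub (lower_sum n A g) I -> 0 <= I.
Proof.
  intros [Hub _]. apply Hub. exists 0%nat, []. split; [constructor|]. split; [constructor|]. reflexivity.
Qed.

Lemma lower_sum_single n A g k z m :
  (forall x, dcube n k z x -> A x) -> (forall x, dcube n k z x -> m <= g x) ->
  lower_sum n A g (m / 2 ^ (k * n)).
Proof.
  intros HA Hg. exists k, [(z, m)]. split; [constructor; [constructor|constructor]|].
  split; [constructor; [split; auto|constructor]|]. simpl. ring.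
Qed.

Lemma vz_in z u : 0 < u -> IZR z / u <= vz z / u <= (IZR z + 1) / u.
Proof.
  intros Hu. unfold vz. assert (0 < / u) by (apply Rinv_0_lt_compat; auto).
  destruct (Z.leb 0 z); unfold Rdiv; split; apply Rmult_le_compat_r; lra.
Qed.

Lemma lower_sum_upper n g K : (forall x, g x <= K * Wt n x) -> 0 <= K ->
  forall s, lower_sum n (fun _ => True) g s -> s <= K * 4 ^ n.
Proof.
  intros Hg HK s [k [cs [Hd [Hf Hs]]]].
  set (u := 2 ^ k). assert (Hu : 1 <= u) by (apply pow_R1_Rle; lra).
  assert (E : s = sumL (fun p => snd p / 2 ^ (k * n)) cs).
  { rewrite Hs. clear. induction cs; simpl; auto. }
  rewrite E.
  eapply Rle_trans.
  - apply (sumL_le _ (fun p => K * prodn n (fun j => az u (fst p j)))).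
    intros p Hp. rewrite Forall_forall in Hf. destruct (Hf p Hp) as [_ Hm].
    set (pt := fun j => vz (fst p j) / u).
    assert (Hin : dcube n k (fst p) pt) by (intros j Hj; unfold pt; apply vz_in; apply pow_lt; lra).
    specialize (Hm pt Hin). specialize (Hg pt).
    assert (Ek : 2 ^ (k * n) = prodn n (fun _ => u)) by (rewrite pow_mult, prodn_const; auto).
    rewrite Ek.
    assert (Hpos : 0 < prodn n (fun _ => u)) by (apply prodn_pos; intros; lra).
    unfold Rdiv. apply (Rmult_le_reg_r (prodn n (fun _ => u))); auto.
    rewrite Rmult_assoc, Rinv_l, Rmult_1_r by lra.
    eapply Rle_trans; [apply Rle_trans with (1 := Hm) (2 := Hg)|].
    rewrite Rmult_assoc. apply Rmult_le_compat_l; auto.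
    unfold Wt. rewrite <- prodn_mul. right. apply prodn_ext. intros j _.
    unfold pt, az. assert (0 <= vz (fst p j) ^ 2) by (simpl; nra). assert (0 <= (vz (fst p j) / u) ^ 2) by (simpl; nra). assert (0 < u ^ 2) by (simpl; nra). field. repeat split; lra.
  - rewrite (sumL_ext _ (fun p => prodn n (fun j => az u (fst p j)) * K)) by (intros; ring).
    rewrite sumL_scal, Rmult_comm. apply Rmult_le_compat_l; auto.
    apply (prod_count (az u) 4); [intros; apply az_nonneg; lra|lra| |exact Hd].
    intros L HL. apply sum1d; auto.
Qed.

Lemma INR_le_pow2 k : INR k <= 2 ^ k.
Proof.
  induction k; [simpl; lra|]. rewrite S_INR. change (2 ^ S k) with (2 * 2 ^ k). assert (1 <= 2 ^ k) by (apply pow_R1_Rle; lra). lra.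
Qed.

Lemma exists_pow2 X : exists L : nat, X <= 2 ^ L.
Proof.
  destruct (archimed X) as [A _].
  destruct (Z_le_gt_dec 0 (up X)).
  - exists (Z.to_nat (up X)). eapply Rle_trans; [|apply INR_le_pow2].
    rewrite INR_IZR_INZ, Z2Nat.id by auto. lra.
  - exists 0%nat. simpl. assert (IZR (up X) <= 0) by (apply IZR_le; lia). lra.
Qed.

Lemma sup_box n (P : Rn -> R) x0 rho : 0 <= rho ->
  (exists B, forall x, Box n x0 rho x -> Rabs (P x) <= B) ->
  exists M, 0 <= M /\ (forall x, Box n x0 rho x -> Rabs (P x) <= M) /\
    (0 < M -> exists xs, Box n x0 rho xs /\ M / 2 < Rabs (P xs)).
Proof.
  intros Hr [B HB].
  set (E := fun v => exists x, Box n x0 rho x /\ v = Rabs (P x)).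
  assert (Hx0 : Box n x0 rho x0) by (intros j _; replace (x0 j - x0 j) with 0 by ring; rewrite Rabs_R0; auto).
  destruct (completeness E) as [M [Hub Hlub]].
  - exists B. intros v [x [Hx ->]]. apply HB; auto.
  - exists (Rabs (P x0)). exists x0; auto.
  - exists M. split; [|split].
    + eapply Rle_trans; [apply Rabs_pos|]. apply Hub. exists x0; auto.
    + intros x Hx. apply Hub. exists x; auto.
    + intros HM. destruct (classic (exists xs, Box n x0 rho xs /\ M / 2 < Rabs (P xs))) as [H|H]; auto.
      exfalso. assert (M <= M / 2); [|lra].
      apply Hlub. intros v [x [Hx ->]]. apply Rnot_lt_le. intro Hlt. apply H. exists x; auto.
Qed.

Definition G0 (n : nat) (x0 : Rn) (rho : R) : R := prodn n (fun j => exp (- ((Rabs (x0 j) + rho) ^ 2))).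

Lemma lower_bound_I n N P (omega : Rn -> Prop) x0 r rho (g : Rn -> R) I_om M xs L0 :
  (1 <= n)%nat -> polyN n N P -> 0 < rho < r ->
  (forall y, (forall j, (j < n)%nat -> Rabs (y j - x0 j) < r) -> omega y) ->
  (forall x, Box n x0 rho x -> Rabs (P x) <= M) -> 0 < M -> Box n x0 rho xs -> M / 2 < Rabs (P xs) ->
  32 * INR n / rho <= 2 ^ L0 ->
  (forall y, Eg n y ^ 2 * P y ^ 2 <= g y) ->
  is_lub (lower_sum n omega g) I_om ->
  G0 n x0 rho * (M / 4) ^ 2 / 2 ^ ((L0 + 5 * N) * n) <= I_om.
Proof.
  intros Hn HP Hr Hball HM HM0 Hxs Hbig HL0 Hg [Hub _].
  destruct (lower_cube n N P x0 rho M xs Hn HP ltac:(lra) HM HM0 Hxs Hbig L0 HL0) as [z Hz].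
  apply Hub. apply (lower_sum_single n omega g (L0 + 5 * N) z).
  - intros y Hy. apply Hball. intros j Hj. destruct (Hz y Hy) as [HB _]. specialize (HB j Hj). lra.
  - intros y Hy. destruct (Hz y Hy) as [HB HPy].
    eapply Rle_trans; [|apply Hg].
    rewrite Eg2. apply Rmult_le_compat.
    + apply prodn_nonneg; intros; left; apply exp_pos.
    + simpl; nra.
    + apply prodn_le. intros j Hj. split; [left; apply exp_pos|].
      specialize (HB j Hj).
      assert (Rabs (y j) <= Rabs (x0 j) + rho).
      { replace (y j) with ((y j - x0 j) + x0 j) by ring.
        eapply Rle_trans; [apply Rabs_triang|]. lra. }
      assert (y j ^ 2 <= (Rabs (x0 j) + rho) ^ 2).
      { rewrite <- (pow2_abs (y j)). pose proof (Rabs_pos (y j)). simpl; nra. }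
      destruct (Req_dec (y j ^ 2) ((Rabs (x0 j) + rho) ^ 2)) as [E|E]; [rewrite E; lra|].
      left. apply exp_increasing. lra.
    + rewrite <- (pow2_abs (P y)). pose proof (Rabs_pos (P y)). simpl. nra.
Qed.

Lemma Nplus1_le N : INR N + 1 <= 2 ^ N.
Proof.
  induction N; [simpl; lra|]. rewrite S_INR. change (2 ^ S N) with (2 * 2 ^ N).
  assert (1 <= 2 ^ N) by (apply pow_R1_Rle; lra). lra.
Qed.

Lemma SN_le N : SN N <= 8 * 8 ^ N * (INR N + 1) ^ N.
Proof.
  unfold SN. rewrite plus_INR. simpl (INR 1).
  set (m := INR N + 1). assert (Hm : 1 <= m) by (unfold m; pose proof (pos_INR N); lra).
  rewrite pow_add. simpl (4 ^ 1). rewrite pow_add. simpl (m ^ 1).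
  assert (1 <= m ^ N) by (apply pow_R1_Rle; lra).
  assert (m <= 2 ^ N) by apply Nplus1_le.
  assert (H4 : 0 < 4 ^ N) by (apply pow_lt; lra).
  replace (8 ^ N) with (4 ^ N * 2 ^ N) by (rewrite <- Rpow_mult_distr; f_equal; ring).
  assert (m ^ N * (m * 1) <= m ^ N * 2 ^ N) by (apply Rmult_le_compat_l; lra).
  assert (1 + m ^ N * (m * 1) <= 2 * (m ^ N * 2 ^ N)) by nra.
  replace (8 * (4 ^ N * 2 ^ N) * m ^ N) with (4 ^ N * (4 * 1) * (2 * (m ^ N * 2 ^ N))) by ring.
  apply Rmult_le_compat_l; [lra|]. auto.
Qed.

Lemma pow_sq_le (P M B : R) : 0 <= M -> 0 <= B -> Rabs P <= M * B -> P ^ 2 <= M ^ 2 * B ^ 2.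
Proof.
  intros HM HB H. rewrite <- (pow2_abs P). pose proof (Rabs_pos P).
  rewrite <- Rpow_mult_distr. apply pow_incr. lra.
Qed.

Lemma main_ineq n (omega : Rn -> Prop) phi : (1 <= n)%nat -> open_n n omega -> (exists x, omega x) ->
  hermite_functions phi ->
  exists A0 A1, 0 <= A0 /\ 0 <= A1 /\
    forall (N : nat) (c d : list nat -> R) (I_Rn I_om : R),
      is_lub (lower_sum n (fun _ => True) (abs2_f phi n N c d)) I_Rn ->
      is_lub (lower_sum n omega (abs2_f phi n N c d)) I_om ->
      I_Rn <= A0 * A1 ^ N * (INR N + 1) ^ N * I_om.
Proof.
  intros Hn Hopen [x0 Hx0] Hh.
  destruct (Hopen x0 Hx0) as [r [Hr Hball]].
  set (rho := r / 2). assert (Hrho : 0 < rho < r) by (unfold rho; lra).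
  destruct (exists_pow2 (32 * INR n / rho)) as [L0 HL0].
  set (Q1 := 9 * K0 n x0 rho ^ 2 * INR n ^ 2).
  set (g0 := G0 n x0 rho).
  assert (Hg0 : 0 < g0) by (apply prodn_pos; intros; apply exp_pos).
  assert (HQ1 : 0 <= Q1) by (unfold Q1; apply Rmult_le_pos; [apply Rmult_le_pos; [lra|]|]; simpl; nra).
  assert (H2L : 0 < 2 ^ L0) by (apply pow_lt; lra).
  exists (256 * (2 ^ L0) ^ n * 4 ^ n / g0), (8 * 32 ^ n * Q1).
  split; [unfold Rdiv; apply Rmult_le_pos; [apply Rmult_le_pos; [apply Rmult_le_pos; [lra|apply pow_le; lra]|apply pow_le; lra]|left; apply Rinv_0_lt_compat; auto]|].
  split; [apply Rmult_le_pos; [apply Rmult_le_pos; [lra|apply pow_le; lra]|auto]|].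
  intros N c d I_Rn I_om HR Hom.
  set (g := abs2_f phi n N c d).
  assert (HPc : polyN n N (Pc phi n N c)) by (split; [intros; apply Pc_line; auto|intros; apply Pc_ext; auto]).
  assert (HPd : polyN n N (Pc phi n N d)) by (split; [intros; apply Pc_line; auto|intros; apply Pc_ext; auto]).
  destruct (sup_box n (Pc phi n N c) x0 rho ltac:(lra)) as [Mc [HMc0 [HMc HMcs]]].
  { destruct (Pc_bounded phi n N c x0 rho Hh) as [B HB]. exists B; auto. }
  destruct (sup_box n (Pc phi n N d) x0 rho ltac:(lra)) as [Md [HMd0 [HMd HMds]]].
  { destruct (Pc_bounded phi n N d x0 rho Hh) as [B HB]. exists B; auto. }
  assert (Hup : forall x, g x <= (Mc ^ 2 + Md ^ 2) * (Q1 ^ N * SN N) * Wt n x).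
  { intros x. unfold g. rewrite abs2_eq, Eg2.
    set (B := 3 * (1 + sumR n (fun j => Rabs (x j - x0 j)) / rho)).
    assert (HB0 : 0 <= B).
    { unfold B. assert (0 <= sumR n (fun j => Rabs (x j - x0 j)) / rho); [|lra].
      unfold Rdiv; apply Rmult_le_pos; [apply sumR_nonneg; intros; apply Rabs_pos|left; apply Rinv_0_lt_compat; lra]. }
    assert (HBN : 0 <= B ^ N) by (apply pow_le; auto).
    pose proof (pow_sq_le _ _ _ HMc0 HBN (upper_pointwise n N _ x0 rho Mc HPc ltac:(lra) HMc x)) as Ec.
    pose proof (pow_sq_le _ _ _ HMd0 HBN (upper_pointwise n N _ x0 rho Md HPd ltac:(lra) HMd x)) as Ed.
    fold B in Ec, Ed.
    pose proof (weight_bound n N x x0 rho Hn ltac:(lra)) as W. fold B in W. fold Q1 in W.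
    replace ((B ^ N) ^ 2) with (B ^ (2 * N)) in Ec, Ed by (rewrite pow_mult, <- !pow_mult; f_equal; lia).
    set (E := prodn n (fun j => exp (- (x j ^ 2)))) in *.
    assert (HE : 0 <= E) by (apply prodn_nonneg; intros; left; apply exp_pos).
    apply Rle_trans with (E * ((Mc ^ 2 + Md ^ 2) * B ^ (2 * N))).
    - apply Rmult_le_compat_l; auto. lra.
    - replace (E * ((Mc ^ 2 + Md ^ 2) * B ^ (2 * N))) with ((Mc ^ 2 + Md ^ 2) * (E * B ^ (2 * N))) by ring.
      rewrite (Rmult_assoc (Mc ^ 2 + Md ^ 2)). apply Rmult_le_compat_l; [nra|]. exact W. }
  assert (HSN : 0 <= SN N) by (unfold SN; apply Rmult_le_pos; [apply pow_le; lra|]; pose proof (pow_le (INR (N + 1)) (N + 1) (pos_INR _)); lra).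
  assert (HIR : I_Rn <= (Mc ^ 2 + Md ^ 2) * (Q1 ^ N * SN N) * 4 ^ n).
  { destruct HR as [_ Hl]. apply Hl. intros s Hs.
    apply (lower_sum_upper n g); auto. apply Rmult_le_pos; [nra|apply Rmult_le_pos; [apply pow_le|]; auto]. }
  assert (HIo : 0 <= I_om) by (eapply lub_nonneg; eauto).
  assert (HA1N : 0 <= (8 * 32 ^ n * Q1) ^ N) by (apply pow_le; apply Rmult_le_pos; [apply Rmult_le_pos; [lra|apply pow_le; lra]|auto]).
  assert (HNN : 0 <= (INR N + 1) ^ N) by (apply pow_le; pose proof (pos_INR N); lra).
  assert (HA0 : 0 <= 256 * (2 ^ L0) ^ n * 4 ^ n / g0).
  { unfold Rdiv; apply Rmult_le_pos; [apply Rmult_le_pos; [apply Rmult_le_pos; [lra|apply pow_le; lra]|apply pow_le; lra]|left; apply Rinv_0_lt_compat; auto]. }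
  assert (Hlow : forall M, 0 < M -> Mc <= M -> Md <= M ->
            g0 * (M / 4) ^ 2 / 2 ^ ((L0 + 5 * N) * n) <= I_om ->
            I_Rn <= 256 * (2 ^ L0) ^ n * 4 ^ n / g0 * (8 * 32 ^ n * Q1) ^ N * (INR N + 1) ^ N * I_om).
  { intros M HM HcM HdM HL.
    assert (E2 : 2 ^ ((L0 + 5 * N) * n) = (2 ^ L0) ^ n * (32 ^ n) ^ N).
    { rewrite pow_mult, pow2_split, Rpow_mult_distr. f_equal. rewrite <- !pow_mult. f_equal. lia. }
    rewrite E2 in HL.
    assert (P1 : 0 < (2 ^ L0) ^ n) by (apply pow_lt; auto).
    assert (P2 : 0 < (32 ^ n) ^ N) by (apply pow_lt, pow_lt; lra).
    assert (H2n : 0 < (2 ^ L0) ^ n * (32 ^ n) ^ N) by (apply Rmult_lt_0_compat; apply pow_lt; [auto|apply pow_lt; lra]).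
    assert (HM2 : M ^ 2 <= 16 * ((2 ^ L0) ^ n * (32 ^ n) ^ N) / g0 * I_om).
    { apply (Rmult_le_reg_r (g0 / (16 * ((2 ^ L0) ^ n * (32 ^ n) ^ N)))).
      - apply Rdiv_lt_0_compat; lra.
      - replace (16 * ((2 ^ L0) ^ n * (32 ^ n) ^ N) / g0 * I_om * (g0 / (16 * ((2 ^ L0) ^ n * (32 ^ n) ^ N))))
          with I_om by (field; repeat split; lra).
        replace (M ^ 2 * (g0 / (16 * ((2 ^ L0) ^ n * (32 ^ n) ^ N)))) with
          (g0 * (M / 4) ^ 2 / ((2 ^ L0) ^ n * (32 ^ n) ^ N)) by (field; repeat split; lra). auto. }
    assert (Hsum : Mc ^ 2 + Md ^ 2 <= 2 * M ^ 2) by (simpl; nra).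
    pose proof (SN_le N) as HS.
    assert (HQN : 0 <= Q1 ^ N) by (apply pow_le; auto).
    assert (H4n : 0 <= 4 ^ n) by (apply pow_le; lra).
    eapply Rle_trans; [exact HIR|].
    apply Rle_trans with (2 * M ^ 2 * (Q1 ^ N * (8 * 8 ^ N * (INR N + 1) ^ N)) * 4 ^ n).
    - apply Rmult_le_compat_r; auto. apply Rmult_le_compat; try nra.
      all: try (apply Rmult_le_compat_l; auto).
    - apply Rle_trans with (2 * (16 * ((2 ^ L0) ^ n * (32 ^ n) ^ N) / g0 * I_om) * (Q1 ^ N * (8 * 8 ^ N * (INR N + 1) ^ N)) * 4 ^ n).
      + apply Rmult_le_compat_r; auto. apply Rmult_le_compat_r; [apply Rmult_le_pos; [auto|apply Rmult_le_pos; [apply Rmult_le_pos; [lra|apply pow_le; lra]|auto]]|]. lra.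
      + right. rewrite !Rpow_mult_distr. field. lra. }
  destruct (Rle_dec Md Mc).
  - destruct (Req_dec Mc 0) as [E0|NE].
    + assert (Md = 0) by lra. subst.
      assert (I_Rn <= 0) by (eapply Rle_trans; [exact HIR|]; right; simpl; ring).
      assert (0 <= 256 * (2 ^ L0) ^ n * 4 ^ n / g0 * (8 * 32 ^ n * Q1) ^ N * (INR N + 1) ^ N * I_om)
        by (apply Rmult_le_pos; [apply Rmult_le_pos; [apply Rmult_le_pos|]|]; auto). lra.
    + destruct (HMcs ltac:(lra)) as [xs [Hxs Hbig]].
      apply (Hlow Mc); try lra.
      apply (lower_bound_I n N (Pc phi n N c) omega x0 r rho g I_om Mc xs L0); auto; [lra|].
      intros y. unfold g. rewrite abs2_eq. pose proof (pow2_ge_0 (Pc phi n N d y)).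
      pose proof (pow2_ge_0 (Eg n y)). nra.
  - destruct (HMds ltac:(lra)) as [xs [Hxs Hbig]].
    apply (Hlow Md); try lra.
    apply (lower_bound_I n N (Pc phi n N d) omega x0 r rho g I_om Md xs L0); auto; [lra|].
    intros y. unfold g. rewrite abs2_eq. pose proof (pow2_ge_0 (Pc phi n N c y)).
    pose proof (pow2_ge_0 (Eg n y)). nra.
Qed.

Theorem mainTheorem1 (n : nat) (omega : Rn -> Prop) (phi : nat -> R -> R) :
  (1 <= n)%nat ->
  subset_Rn n omega ->
  open_n n omega ->
  (exists x, omega x) ->
  hermite_functions phi ->
  exists C : R, 1 < C /\
    forall (N : nat) (c d : list nat -> R) (I_Rn I_omega : R),
      is_lub (lower_sum n (fun _ => True) (abs2_f phi n N c d)) I_Rn ->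
      is_lub (lower_sum n omega (abs2_f phi n N c d)) I_omega ->
      sqrt I_Rn <=
        C * exp (1 / 2 * INR N * ln (INR N + 1) + C * INR N) * sqrt I_omega.
Proof.
  intros Hn _ Hopen Hex Hh.
  destruct (main_ineq n omega phi Hn Hopen Hex Hh) as [A0 [A1 [HA0 [HA1 Hmain]]]].
  exists (A0 + A1 + 2). split; [lra|].
  intros N c d I_Rn I_om HR Hom.
  set (C := A0 + A1 + 2).
  pose proof (Hmain N c d I_Rn I_om HR Hom) as HI.
  assert (HIo : 0 <= I_om) by (eapply lub_nonneg; eauto).
  set (Rr := C * exp (1 / 2 * INR N * ln (INR N + 1) + C * INR N)).
  assert (HRr : 0 <= Rr) by (unfold Rr, C; apply Rmult_le_pos; [lra|left; apply exp_pos]).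
  assert (HN1 : 0 < INR N + 1) by (pose proof (pos_INR N); lra).
  assert (ER : Rr ^ 2 = C ^ 2 * ((INR N + 1) ^ N * exp (2 * C) ^ N)).
  { unfold Rr. rewrite Rpow_mult_distr. f_equal.
    rewrite <- (Rpower_pow N (INR N + 1) HN1), exp_pow_nat. unfold Rpower.
    rewrite exp_pow_nat, <- exp_plus. f_equal. replace (INR 2) with 2 by (simpl; ring). field. }
  assert (HC : A0 <= C ^ 2) by (unfold C; simpl; nra).
  assert (HC2 : A1 <= exp (2 * C)) by (pose proof (exp_ineq1_le (2 * C)); unfold C in *; lra).
  assert (I_Rn <= Rr ^ 2 * I_om).
  { eapply Rle_trans; [exact HI|]. rewrite ER. apply Rmult_le_compat_r; auto.
    assert (HNN : 0 <= (INR N + 1) ^ N) by (apply pow_le; lra).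
    assert (HA1N : A1 ^ N <= exp (2 * C) ^ N) by (apply pow_incr; lra).
    assert (0 <= A1 ^ N) by (apply pow_le; lra).
    replace (A0 * A1 ^ N * (INR N + 1) ^ N) with (A0 * ((INR N + 1) ^ N * A1 ^ N)) by ring.
    apply Rmult_le_compat; auto; [apply Rmult_le_pos; auto|].
    apply Rmult_le_compat_l; auto. }
  eapply Rle_trans; [apply sqrt_le_1_alt; exact H|].
  rewrite sqrt_mult_alt by (apply pow_le; auto).
  rewrite <- (sqrt_pow2 Rr HRr) at 2. right; reflexivity.
Qed.
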